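(* Setting. Let $u\in C^4(B_R(0))$, $B_R(0)\subset\mathbb{R}^2$, be a convex solution of $\det D^2u=f$ in $B_R(0)$ with $f\in C^2$, $0<m\le f\le M$. Put $r=R/\sqrt2$, $\beta=4$, $c_0=32/m$, $g(t)=e^{c_0t/r^2}$. Let $\tau(x)=(\tau_1(x),\tau_2(x))\in\mathbb{S}^1$ be a continuous unit eigenvector field of $D^2u(x)$ for its largest eigenvalue, let $$\Sigma=\{x\in B_R(0):\ r^2-|x|^2+\langle x,\tau(x)\rangle^2>0,\ r^2-\langle x,\tau(x)\rangle^2>0\},$$ $$\eta(x)=(r^2-|x|^2+\langle x,\tau(x)\rangle^2)(r^2-\langle x,\tau(x)\rangle^2),\qquad \phi(x)=\eta(x)^\beta g(\tfrac12|Du(x)|^2)\,u_{\tau\tau}(x),$$ where $u_{\tau\tau}=\langle D^2u\,\tau,\tau\rangle$. Let $x_0\in\Sigma$ be a point where $\phi$ attains its maximum over $\Sigma$, and choose (after a rotation of coordinates) coordinates in which $D^2u(x_0)$ is diagonal with $\lambda_1=u_{11}(x_0)\ge\lambda_2=u_{22}(x_0)$ and $\tau(x_0)=(1,0)$. Assume $$\eta(x_0)\lambda_1\ge 10^3\Big(1+M+r\sup|\nabla f|+\frac Mm\frac{\sup|Du|}{r}\Big)r^4$$ (so that $\lambda_1>\lambda_2$ and $\tau$, hence $\eta$, is $C^2$ near $x_0$). Write $\eta_i,\eta_{ii}$ for partial derivatives of $\eta$, $u_i,u_{ijk}$, $f_i,f_{ij}$ for partial derivatives of $u,f$, and $\frac{g'}{g}=\frac{g'(\frac12|Du|^2)}{g(\frac12|Du|^2)}=\frac{c_0}{r^2}$.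 Then, with everything evaluated at $x_0$, $$\beta\frac f{\lambda_1}\frac{\eta_1^2}{\eta^2}\le\frac{8\beta fr^6}{\eta^2\lambda_1}+\frac{\lambda_1}4\Big(\frac{u_{112}}{u_{11}}\Big)^2,\qquad \beta f\frac{g'}g\frac{\eta_2}\eta u_2\ge-4\beta f\frac{g'}g\frac{r^4}\eta\frac{|u_2|}r,$$ and $$\begin{aligned}\beta\Big[\frac f{\lambda_1}\frac{\eta_{11}}\eta+\lambda_1\frac{\eta_{22}}\eta\Big]\ge{}&-\frac12\frac{g'}gf\lambda_1-\beta\lambda_1\Big(\frac{\eta_2}\eta\Big)^2-\frac f{2\lambda_1}\Big(\frac{u_{111}}{u_{11}}\Big)^2-\frac{\lambda_1}4\Big(\frac{u_{112}}{u_{11}}\Big)^2\\ &-\frac{2\beta fr^2}{\eta\lambda_1}-\frac{4\beta|f_{12}|r^4}{\eta\lambda_1}-\frac{32\beta f_1^2r^4}{\eta\lambda_1^3}-\frac{8\beta|f_1f_2|r^4}{\eta\lambda_1^3}-\frac{24\beta|f_1|r^3}{\eta\lambda_1}\\ &-\frac{6\beta|f_1|^2r^4}{\eta\lambda_1}-\frac{12\beta fr^2}{\eta\lambda_1}-\frac{8\beta fr^4|f_2|^2}{\eta\lambda_1^3}-\frac{(48\beta)^2fr^6}{\eta^2\lambda_1}-\frac{32\beta^2|f_2|^2r^8}{\eta^2\lambda_1f}.\end{aligned}$$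
   Context: All suprema are over $B_R(0)$. The quantity $\langle x,\tau(x)\rangle^2$ is independent of the sign choice of $\tau$ and invariant under rotations of coordinates, so $\eta$ and $\Sigma$ are well defined; $B_r(0)\subset\Sigma\subset B_R(0)$ and $\eta>0$ in $\Sigma$, $\eta=0$ on $\partial\Sigma$. *)

(* Defs.v *)
From Stdlib Require Import Reals Lra.
Open Scope R_scope.

Definition in_ball (Rad x y : R) : Prop := x * x + y * y < Rad * Rad.

Definition cont2_on (D : R -> R -> Prop) (h : R -> R -> R) : Prop :=
  forall x y, D x y -> forall eps, eps > 0 -> exists del, del > 0 /\
    forall x' y', D x' y' -> (x' - x) ^ 2 + (y' - y) ^ 2 < del ^ 2 ->
      Rabs (h x' y' - h x y) < eps.

(* [U] is the family of all partial derivatives of order <= k of [U 0 0] on D,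
   continuous on D: U i j = d^i/dx^i d^j/dy^j (U 0 0).  Hence U 0 0 is C^k on D
   (D open), and conversely every C^k function admits such a family (Schwarz). *)
Definition Ck_family (D : R -> R -> Prop) (k : nat) (U : nat -> nat -> R -> R -> R) : Prop :=
  (forall i j x y, (i + j < k)%nat -> D x y ->
     derivable_pt_lim (fun s => U i j s y) x (U (S i) j x y) /\
     derivable_pt_lim (fun t => U i j x t) y (U i (S j) x y)) /\
  (forall i j, (i + j <= k)%nat -> cont2_on D (U i j)).

Definition convex_on_ball (Rad : R) (u : R -> R -> R) : Prop :=
  forall x1 y1 x2 y2 t, in_ball Rad x1 y1 -> in_ball Rad x2 y2 -> 0 <= t <= 1 ->
    u (t * x1 + (1 - t) * x2) (t * y1 + (1 - t) * y2)
      <= t * u x1 y1 + (1 - t) * u x2 y2.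

Definition top_unit_eigvec (a b c v1 v2 : R) : Prop :=
  v1 ^ 2 + v2 ^ 2 = 1 /\
  exists mu, a * v1 + b * v2 = mu * v1 /\ b * v1 + c * v2 = mu * v2 /\
    forall nu w1 w2, (w1 <> 0 \/ w2 <> 0) ->
      a * w1 + b * w2 = nu * w1 -> b * w1 + c * w2 = nu * w2 -> nu <= mu.

Definition eta_fun (r : R) (t1 t2 : R -> R -> R) (x y : R) : R :=
  (r ^ 2 - (x ^ 2 + y ^ 2) + (x * t1 x y + y * t2 x y) ^ 2) *
  (r ^ 2 - (x * t1 x y + y * t2 x y) ^ 2).

Definition in_Sigma (Rad r : R) (t1 t2 : R -> R -> R) (x y : R) : Prop :=
  in_ball Rad x y /\
  r ^ 2 - (x ^ 2 + y ^ 2) + (x * t1 x y + y * t2 x y) ^ 2 > 0 /\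
  r ^ 2 - (x * t1 x y + y * t2 x y) ^ 2 > 0.

Definition g_fun (c0 r t : R) : R := exp (c0 * t / r ^ 2).

Definition phi_fun (r c0 : R) (U : nat -> nat -> R -> R -> R) (t1 t2 : R -> R -> R)
    (x y : R) : R :=
  eta_fun r t1 t2 x y ^ 4 *
  g_fun c0 r (/ 2 * (U 1%nat 0%nat x y ^ 2 + U 0%nat 1%nat x y ^ 2)) *
  (U 2%nat 0%nat x y * t1 x y ^ 2 + 2 * U 1%nat 1%nat x y * t1 x y * t2 x y
   + U 0%nat 2%nat x y * t2 x y ^ 2).

(* Main.v *)
Require Import Defs.
From Stdlib Require Import Reals Lra Lia.
From Coquelicot Require Import Coquelicot.
Open Scope R_scope.

Lemma sqrt_eq_t (u t : R) : 0 <= t -> u = t * t -> sqrt u = t.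
Proof. intros h e; subst u; apply sqrt_square; exact h. Qed.
Definition SE (a b c : R) := (a - c)^2 + 4*b^2.
Definition NE (x y a b c : R) := (a - c)*(x^2 - y^2)/2 + 2*b*x*y.
Definition qE (x y a b c : R) := (x^2+y^2)/2 + NE x y a b c / sqrt (SE a b c).
Definition etaE (r x y a b c : R) := (r^2 - (x^2+y^2) + qE x y a b c) * (r^2 - qE x y a b c).
Definition qD (x y a b c x' y' a' b' c' : R) :=
  let D := sqrt (SE a b c) in
  x*x' + y*y' + ((a'-c')*(x^2-y^2)/2 + (a-c)*(x*x' - y*y') + 2*b'*x*y + 2*b*(x'*y + x*y'))/D
  - NE x y a b c * (2*(a-c)*(a'-c') + 8*b*b') / (2 * D^3).
Definition etaD (r x y a b c x' y' a' b' c' : R) :=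
  let q := qE x y a b c in let q' := qD x y a b c x' y' a' b' c' in
  (-2*(x*x'+y*y') + q') * (r^2 - q) - (r^2 - (x^2+y^2) + q) * q'.

Lemma sqrtSE_b0 (a c : R) : 0 < a - c -> sqrt (SE a 0 c) = a - c.
Proof. intros h. apply sqrt_eq_t; [lra| unfold SE; ring]. Qed.

Lemma qE_b0 (x y a c : R) : 0 < a - c -> qE x y a 0 c = x^2.
Proof. intros h. unfold qE. rewrite sqrtSE_b0 by exact h. unfold NE. field. lra. Qed.

Lemma etaE_b0 (r x y a c : R) : 0 < a - c -> etaE r x y a 0 c = (r^2 - y^2) * (r^2 - x^2).
Proof. intros h. unfold etaE. rewrite qE_b0 by exact h. ring. Qed.

Lemma etaD_b0 (r x y a c x' y' a' b' c' : R) : 0 < a - c ->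
  etaD r x y a 0 c x' y' a' b' c' =
  (-2*(x*x'+y*y') + (2*x*x' + 2*b'*x*y/(a-c))) * (r^2 - x^2)
  - (r^2 - y^2) * (2*x*x' + 2*b'*x*y/(a-c)).
Proof. intros h. unfold etaD, qD. cbv zeta. rewrite qE_b0 by exact h. rewrite sqrtSE_b0 by exact h.
  unfold NE. field. lra. Qed.

Lemma qE_ex_derive (y : R) (A B C : R -> R) (s A' B' C' : R) :
  is_derive A s A' -> is_derive B s B' -> is_derive C s C' -> 0 < SE (A s) (B s) (C s) ->
  ex_derive (fun t => qE t y (A t) (B t) (C t)) s.
Proof.
  intros hA hB hC hS. unfold qE, NE, SE in *. auto_derive.
  assert (0 < sqrt ((A s + - C s) * ((A s + - C s) * 1) + 4 * (B s * (B s * 1)))) by (apply sqrt_lt_R0; nra).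
  repeat split; try solve [eexists; eassumption | nra | apply Rgt_not_eq; lra | apply Rgt_not_eq; repeat apply Rmult_lt_0_compat; lra].
Qed.

Lemma cont_of_is_derive (f : R -> R) (x l : R) : is_derive f x l ->
  forall eps, 0 < eps -> exists d, 0 < d /\ forall s, Rabs (s - x) < d -> Rabs (f s - f x) < eps.
Proof.
  intros hd eps he. apply is_derive_Reals in hd.
  assert (hc : continuity_pt f x) by (apply derivable_continuous_pt; exists l; exact hd).
  destruct (hc eps he) as [d [dp hd']].
  exists d; split; [exact dp|]. intros s hs.
  destruct (Req_dec s x) as [->|hne].
  - rewrite Rminus_diag, Rabs_R0. exact he.
  - apply (hd' s). split; [split; [exact I| auto]| exact hs].
Qed.
Lemma etaE_deriv (r : R) (X Y A B C : R -> R) (s X' Y' A' B' C' : R) :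
  is_derive X s X' -> is_derive Y s Y' -> is_derive A s A' -> is_derive B s B' ->
  is_derive C s C' -> 0 < SE (A s) (B s) (C s) ->
  is_derive (fun t => etaE r (X t) (Y t) (A t) (B t) (C t)) s
    (etaD r (X s) (Y s) (A s) (B s) (C s) X' Y' A' B' C').
Proof.
  intros hX hY hA hB hC hS.
  unfold etaD, qD, etaE, qE, NE.
  unfold SE in *. cbv zeta.
  auto_derive.
  - assert (0 < sqrt ((A s + - C s) * ((A s + - C s) * 1) + 4 * (B s * (B s * 1)))) by (apply sqrt_lt_R0; nra).
    repeat split; solve [eexists; eassumption | nra | apply Rgt_not_eq; lra].
  - 
    replace (Derive (fun x : R => X x) s) with X' by (symmetry; apply is_derive_unique; exact hX).
    replace (Derive (fun x : R => Y x) s) with Y' by (symmetry; apply is_derive_unique; exact hY).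
    replace (Derive (fun x : R => A x) s) with A' by (symmetry; apply is_derive_unique; exact hA).
    replace (Derive (fun x : R => B x) s) with B' by (symmetry; apply is_derive_unique; exact hB).
    replace (Derive (fun x : R => C x) s) with C' by (symmetry; apply is_derive_unique; exact hC).
    set (S := (A s - C s)^2 + 4 * B s ^2) in *.
    assert (hD : sqrt S * sqrt S = S) by (apply sqrt_sqrt; lra).
    assert (hDp : 0 < sqrt S) by (apply sqrt_lt_R0; lra).
    replace ((A s + - C s) * ((A s + - C s) * 1) + 4 * (B s * (B s * 1))) with S by (unfold S; ring).
    set (D := sqrt S) in *. 
    field. lra.
Qed.



Definition V11 (r x y w w' bp bpp : R) :=
  let q1 := 2*x + 2*x*y*bp/w in
  let q11 := 2 + 2*bpp*x*y/w + 4*bp*y/w - 4*bp*w'*x*y/w^2 - 2*bp^2*(x^2-y^2)/w^2 in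
  -2*(r^2-x^2) + q11*(y^2 - x^2) + 4*x*q1 - 2*q1^2.
Definition V22 (r x y w w' bp bpp : R) :=
  let q2 := 2*x*y*bp/w in
  let q22 := 2*bpp*x*y/w + 4*bp*x/w - 4*bp*w'*x*y/w^2 - 2*bp^2*(x^2-y^2)/w^2 in
  -2*(r^2-x^2) + q22*(y^2 - x^2) + 4*y*q2 - 2*q2^2.

Lemma etaD_xx (r : R) (a b c a1 b1 c1 : R -> R) (x y A2 B2 C2 : R) :
  is_derive a x (a1 x) -> is_derive b x (b1 x) -> is_derive c x (c1 x) ->
  is_derive a1 x A2 -> is_derive b1 x B2 -> is_derive c1 x C2 ->
  b x = 0 -> 0 < a x - c x ->
  is_derive (fun s => etaD r s y (a s) (b s) (c s) 1 0 (a1 s) (b1 s) (c1 s)) x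
    (V11 r x y (a x - c x) (a1 x - c1 x) (b1 x) B2).
Proof.
  intros ha hb hc ha1 hb1 hc1 hb0 hw.
  unfold etaD, qD, etaE, qE, NE, SE, V11. cbv zeta.
  auto_derive.
  - assert (0 < sqrt ((a x + - c x) * ((a x + - c x) * 1) + 4 * (b x * (b x * 1)))) by (apply sqrt_lt_R0; nra).
    repeat split; try solve [eexists; eassumption | nra | apply Rgt_not_eq; lra | apply Rgt_not_eq; repeat apply Rmult_lt_0_compat; lra].
  - 
    replace (Derive (fun x : R => a x) x) with (a1 x) by (symmetry; apply is_derive_unique; exact ha).
    replace (Derive (fun x : R => b x) x) with (b1 x) by (symmetry; apply is_derive_unique; exact hb).
    replace (Derive (fun x : R => c x) x) with (c1 x) by (symmetry; apply is_derive_unique; exact hc).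
    replace (Derive (fun x : R => a1 x) x) with A2 by (symmetry; apply is_derive_unique; exact ha1).
    replace (Derive (fun x : R => b1 x) x) with B2 by (symmetry; apply is_derive_unique; exact hb1).
    replace (Derive (fun x : R => c1 x) x) with C2 by (symmetry; apply is_derive_unique; exact hc1).
    rewrite hb0.
    replace (sqrt ((a x + - c x) * ((a x + - c x) * 1) + 4 * (0 * (0 * 1)))) with (a x - c x)
    by (symmetry; apply sqrt_eq_t; [lra|ring]).
    replace (sqrt ((a x - c x) ^ 2 + 4 * 0 ^ 2)) with (a x - c x)
    by (symmetry; apply sqrt_eq_t; [lra|ring]).
    field. lra.
Qed.

Lemma etaD_yy (r : R) (a b c a1 b1 c1 : R -> R) (y x A2 B2 C2 : R) :
  is_derive a x (a1 x) -> is_derive b x (b1 x) -> is_derive c x (c1 x) ->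
  is_derive a1 x A2 -> is_derive b1 x B2 -> is_derive c1 x C2 ->
  b x = 0 -> 0 < a x - c x ->
  is_derive (fun s => etaD r y s (a s) (b s) (c s) 0 1 (a1 s) (b1 s) (c1 s)) x
    (V22 r y x (a x - c x) (a1 x - c1 x) (b1 x) B2).
Proof.
  intros ha hb hc ha1 hb1 hc1 hb0 hw.
  unfold etaD, qD, etaE, qE, NE, SE, V22. cbv zeta.
  auto_derive.
  - assert (0 < sqrt ((a x + - c x) * ((a x + - c x) * 1) + 4 * (b x * (b x * 1)))) by (apply sqrt_lt_R0; nra).
    repeat split; try solve [eexists; eassumption | nra | apply Rgt_not_eq; lra | apply Rgt_not_eq; repeat apply Rmult_lt_0_compat; lra].
  - 
    replace (Derive (fun x : R => a x) x) with (a1 x) by (symmetry; apply is_derive_unique; exact ha).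
    replace (Derive (fun x : R => b x) x) with (b1 x) by (symmetry; apply is_derive_unique; exact hb).
    replace (Derive (fun x : R => c x) x) with (c1 x) by (symmetry; apply is_derive_unique; exact hc).
    replace (Derive (fun x : R => a1 x) x) with A2 by (symmetry; apply is_derive_unique; exact ha1).
    replace (Derive (fun x : R => b1 x) x) with B2 by (symmetry; apply is_derive_unique; exact hb1).
    replace (Derive (fun x : R => c1 x) x) with C2 by (symmetry; apply is_derive_unique; exact hc1).
    rewrite hb0.
    replace (sqrt ((a x + - c x) * ((a x + - c x) * 1) + 4 * (0 * (0 * 1)))) with (a x - c x)
    by (symmetry; apply sqrt_eq_t; [lra|ring]).
    replace (sqrt ((a x - c x) ^ 2 + 4 * 0 ^ 2)) with (a x - c x)
    by (symmetry; apply sqrt_eq_t; [lra|ring]).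
    field. lra.
Qed.
Lemma phi_deriv (K : R) (h p q a b c : R -> R) (s h' p' q' a' b' c' : R) :
  is_derive h s h' -> is_derive p s p' -> is_derive q s q' -> is_derive a s a' ->
  is_derive b s b' -> is_derive c s c' -> b s = 0 -> 0 < a s - c s ->
  is_derive (fun t => h t ^ 4 * exp (K * (/ 2 * (p t ^ 2 + q t ^ 2))) *
        ((a t + c t + sqrt ((a t - c t)^2 + 4 * b t ^2)) / 2)) s
    (h s ^ 3 * exp (K * (/ 2 * (p s ^ 2 + q s ^ 2))) *
       (4 * h' * a s + h s * K * (p s * p' + q s * q') * a s + h s * a')).
Proof.
  intros hh hp hq ha hb hc hb0 hw.
  auto_derive.
  - assert (0 < sqrt ((a s + - c s) * ((a s + - c s) * 1) + 4 * (b s * (b s * 1)))) by (apply sqrt_lt_R0; nra).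
    repeat split; try solve [eexists; eassumption | nra | apply Rgt_not_eq; lra | apply Rgt_not_eq; repeat apply Rmult_lt_0_compat; lra].
  - 
    replace (Derive (fun x : R => h x) s) with h' by (symmetry; apply is_derive_unique; exact hh).
    replace (Derive (fun x : R => p x) s) with p' by (symmetry; apply is_derive_unique; exact hp).
    replace (Derive (fun x : R => q x) s) with q' by (symmetry; apply is_derive_unique; exact hq).
    replace (Derive (fun x : R => a x) s) with a' by (symmetry; apply is_derive_unique; exact ha).
    replace (Derive (fun x : R => b x) s) with b' by (symmetry; apply is_derive_unique; exact hb).
    replace (Derive (fun x : R => c x) s) with c' by (symmetry; apply is_derive_unique; exact hc).
    rewrite hb0.
    replace (sqrt ((a s + - c s) * ((a s + - c s) * 1) + 4 * (0 * (0 * 1)))) with (a s - c s)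
    by (symmetry; apply sqrt_eq_t; [lra|ring]).
    replace (p s * (p s * 1) + q s * (q s * 1)) with (p s ^ 2 + q s ^ 2) by ring. field. lra.
Qed.
Lemma max_deriv0 (f : R -> R) (x l d : R) :
  derivable_pt_lim f x l -> d > 0 -> (forall y, Rabs (y - x) < d -> f y <= f x) -> l = 0.
Proof.
  intros hd dpos hm.
  destruct (Req_dec l 0) as [|hl]; [assumption|exfalso].
  destruct (hd (Rabs l / 2)) as [del hdel].
  { assert (0 < Rabs l) by (apply Rabs_pos_lt; exact hl). lra. }
  assert (hdp := cond_pos del).
  set (h := Rmin del d / 2).
  assert (hh : 0 < h /\ h < del /\ h < d).
  { unfold h. pose proof (Rmin_l del d); pose proof (Rmin_r del d).
    assert (0 < Rmin del d) by (apply Rmin_pos; lra). lra. }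
  destruct hh as [h0 [h1 h2]].
  destruct (Rlt_or_le 0 l) as [lp|ln].
  - specialize (hdel h (Rgt_not_eq _ _ h0)). rewrite Rabs_right in hdel by lra.
    specialize (hdel ltac:(lra)).
    assert (hm' := hm (x + h)). replace (x + h - x) with h in hm' by ring.
    rewrite Rabs_right in hm' by lra. specialize (hm' h2).
    rewrite (Rabs_right l) in hdel by lra.
    apply Rabs_def2 in hdel. destruct hdel as [_ hlo].
    assert ((f (x + h) - f x) / h <= 0).
    { unfold Rdiv. replace ((f (x + h) - f x) * / h) with (- ((f x - f (x + h)) * / h)) by ring.
      assert (0 <= (f x - f (x + h)) * / h); [|lra].
      apply Rmult_le_pos. lra. left. apply Rinv_0_lt_compat. lra. }
    lra.
  - specialize (hdel (- h)). 
    assert (hne : - h <> 0) by lra.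
    specialize (hdel hne). rewrite Rabs_Ropp, Rabs_right in hdel by lra.
    specialize (hdel ltac:(lra)).
    assert (hm' := hm (x + - h)). replace (x + - h - x) with (- h) in hm' by ring.
    rewrite Rabs_Ropp, Rabs_right in hm' by lra. specialize (hm' h2).
    assert (ln' : l < 0) by lra.
    rewrite (Rabs_left l) in hdel by lra.
    apply Rabs_def2 in hdel. destruct hdel as [hup _].
    assert (0 <= (f (x + - h) - f x) / - h).
    { unfold Rdiv. replace ((f (x + - h) - f x) * / - h) with ((f x - f (x + - h)) * / h) by (field; lra).
      apply Rmult_le_pos. lra. left. apply Rinv_0_lt_compat. lra. }
    lra.
Qed.
Lemma eig_facts (a b c v1 v2 x y : R) : top_unit_eigvec a b c v1 v2 -> 0 < SE a b c ->
  (x*v1 + y*v2)^2 = qE x y a b c /\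
  a*v1^2 + 2*b*v1*v2 + c*v2^2 = (a + c + sqrt (SE a b c))/2.
Proof.
  intros [hn [mu [e1 [e2 htop]]]] hS.
  unfold qE, NE. set (S := SE a b c) in *.
  assert (hD : sqrt S * sqrt S = S) by (apply sqrt_sqrt; lra).
  assert (hDp : 0 < sqrt S) by (apply sqrt_lt_R0; lra).
  set (D := sqrt S) in *. unfold S, SE in hD.
  assert (hch : (a - mu) * (c - mu) = b^2).
  { assert (E1 : (a-mu)*v1 = - b*v2) by lra.
    assert (E2 : (c-mu)*v2 = - b*v1) by lra.
    assert (h1 : ((a-mu)*(c-mu) - b^2) * v1 = 0).
    { replace (((a-mu)*(c-mu) - b^2) * v1) with ((c-mu)*((a-mu)*v1) - b^2*v1) by ring.
      rewrite E1. replace ((c-mu)*(-b*v2)) with (-b*((c-mu)*v2)) by ring. rewrite E2. ring. }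
    assert (h2 : ((a-mu)*(c-mu) - b^2) * v2 = 0).
    { replace (((a-mu)*(c-mu) - b^2) * v2) with ((a-mu)*((c-mu)*v2) - b^2*v2) by ring.
      rewrite E2. replace ((a-mu)*(-b*v1)) with (-b*((a-mu)*v1)) by ring. rewrite E1. ring. }
    assert (((a-mu)*(c-mu) - b^2)^2 * (v1^2+v2^2) = 0) by nra. rewrite hn in H. nra. }
  set (nu := (a + c + D)/2).
  assert (hnu : nu <= mu).
  { destruct (Req_dec (nu - c) 0) as [h0|h0].
    - assert (hb : b = 0) by (unfold nu in h0; nra).
      apply (htop nu b (nu - a)).
      + right. unfold nu in *. nra.
      + unfold nu. nra.
      + unfold nu. nra.
    - apply (htop nu (nu - c) b).
      + left; exact h0.
      + unfold nu. nra.
      + unfold nu. nra. }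
  assert (hmu : mu = nu).
  { assert ((mu - nu) * (mu - (a + c - D)/2) = 0).
    { replace ((mu - nu) * (mu - (a + c - D)/2)) with ((a-mu)*(c-mu) - b^2 + ((a-c)^2+4*b^2 - D*D)/4) by (unfold nu; field).
      rewrite hch, hD. field. }
    destruct (Rmult_integral _ _ H) as [h|h]; [lra|]. unfold nu in hnu. lra. }
  assert (hE : (mu-a)*v1^2 = (mu-c)*v2^2).
  { assert (E1 : (mu-a)*v1 = b*v2) by lra.
    assert (E2 : (mu-c)*v2 = b*v1) by lra.
    replace ((mu-a)*v1^2) with (((mu-a)*v1)*v1) by ring.
    replace ((mu-c)*v2^2) with (((mu-c)*v2)*v2) by ring. rewrite E1, E2. ring. }
  assert (hv1 : v1^2 * D = mu - c).
  { assert (v2^2 = 1 - v1^2) by lra. rewrite H in hE. unfold nu in hmu.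
    assert (D = 2*mu - a - c) by lra. rewrite H0. nra. }
  assert (hv2 : v2^2 * D = mu - a).
  { assert (v1^2 = 1 - v2^2) by lra. rewrite H in hE. unfold nu in hmu.
    assert (D = 2*mu - a - c) by lra. rewrite H0. nra. }
  assert (hv12 : v1 * v2 * D = b).
  { assert (hbz : b * (v1 * v2 * D - b) = 0).
    { assert (E1 : (mu-a)*v1 = b*v2) by lra.
      assert (b*v1*v2 = (mu - a)*v1^2) by (replace ((mu-a)*v1^2) with (((mu-a)*v1)*v1) by ring; rewrite E1; ring).
      replace (b * (v1 * v2 * D - b)) with ((b*v1*v2)*D - b^2) by ring. rewrite H.
      replace ((mu - a) * v1 ^ 2 * D) with ((mu-a)*(v1^2*D)) by ring. rewrite hv1.
      rewrite <- hch. ring. }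
    assert ((v1 * v2 * D - b)^2 = 0) by nra.
    nra. }
  split.
  - apply (Rmult_eq_reg_r D); [|lra].
    replace ((x * v1 + y * v2) ^ 2 * D) with (x^2 * (v1^2*D) + 2*x*y*(v1*v2*D) + y^2*(v2^2*D)) by ring.
    rewrite hv1, hv2, hv12, hmu. unfold nu. field. lra.
  - replace (a * v1 ^ 2 + 2 * b * v1 * v2 + c * v2 ^ 2) with (v1*(a*v1 + b*v2) + v2*(b*v1+c*v2)) by ring.
    rewrite e1, e2. replace (v1 * (mu * v1) + v2 * (mu * v2)) with (mu * (v1^2+v2^2)) by ring.
    rewrite hn, hmu. unfold nu. ring.
Qed.


Lemma sq_bound (u v : R) : (u + v)^2 <= 2*u^2 + 2*v^2.
Proof. pose proof (pow2_ge_0 (u - v)). nra. Qed.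

Lemma div_nonneg (a b : R) : 0 <= a -> 0 < b -> 0 <= a / b.
Proof. intros ha hb. unfold Rdiv. apply Rmult_le_pos; [exact ha| left; apply Rinv_0_lt_compat; exact hb]. Qed.

Lemma div_le_self (Z L : R) : 0 <= Z -> 1 <= L -> Z / L <= Z.
Proof. intros hz hl. apply (Rmult_le_reg_r L); [lra|]. unfold Rdiv. rewrite Rmult_assoc, Rinv_l by lra. nra. Qed.

Lemma div_le_k (Z L k : R) : 0 <= Z -> 0 < k -> k <= L -> Z / L <= Z / k.
Proof. intros hz hk hl. unfold Rdiv. apply Rmult_le_compat_l; [exact hz|]. apply Rinv_le_contravar; lra. Qed.

Lemma div_le_of (a b c : R) : 0 < b -> a <= c * b -> a / b <= c.
Proof. intros hb h. apply (Rmult_le_reg_r b); [exact hb|]. unfold Rdiv. rewrite Rmult_assoc, Rinv_l by lra. lra. Qed.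

Lemma abs_div_le (a b : R) : 0 < b -> Rabs (a / b) = Rabs a / b.
Proof. intros hb. unfold Rdiv. rewrite Rabs_mult, Rabs_inv. rewrite (Rabs_right b) by lra. reflexivity. Qed.

Lemma abs_le_both (x a : R) : Rabs x <= a -> -a <= x /\ x <= a.
Proof. intros h. pose proof (Rle_abs x). pose proof (Rle_abs (-x)). rewrite Rabs_Ropp in H0. lra. Qed.

Lemma lin_lb (k Z z : R) : 0 <= k -> Rabs Z <= z -> -(k*z) <= k*Z.
Proof. intros hk hz. pose proof (abs_le_both _ _ hz). nra. Qed.

Lemma scal_le (c1 c2 Z : R) : 0 <= Z -> c1 <= c2 -> c1 * Z <= c2 * Z.
Proof. intros hz hc. apply Rmult_le_compat_r; assumption. Qed.

Lemma sq_abs (x : R) : Rabs x ^ 2 = x ^ 2.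
Proof. rewrite RPow_abs. apply Rabs_right. apply Rle_ge, pow2_ge_0. Qed.

Lemma mul3_le (a b c A B C : R) : 0 <= a -> a <= A -> 0 <= b -> b <= B -> 0 <= c -> c <= C -> a * b * c <= A * B * C.
Proof. intros. apply Rmult_le_compat; try apply Rmult_le_pos; try apply Rmult_le_compat; assumption. Qed.


Lemma am1 (C Cb x al : R) : Rabs C <= Cb -> 0 < al -> -(al * x^2 + Cb^2 / (4 * al)) <= C * x.
Proof.
  intros hC ha.
  assert (h1 : - (Cb * Rabs x) <= C * x).
  { pose proof (Rabs_pos x). assert (Rabs (C * x) <= Cb * Rabs x) by (rewrite Rabs_mult; apply Rmult_le_compat_r; lra).
    pose proof (Rle_abs (-(C*x))). rewrite Rabs_Ropp in H1. lra. }
  assert (h2 : Cb * Rabs x <= al * x^2 + Cb^2 / (4 * al)).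
  { assert (0 <= (2 * al * Rabs x - Cb)^2) by apply pow2_ge_0.
    assert (Rabs x ^ 2 = x ^ 2) by (rewrite RPow_abs; apply Rabs_right; apply Rle_ge; apply pow2_ge_0).
    assert (E : al * x^2 + Cb^2 / (4 * al) - Cb * Rabs x = (2 * al * Rabs x - Cb)^2 / (4 * al)).
    { rewrite <- H0. field. lra. }
    assert (0 <= (2 * al * Rabs x - Cb)^2 / (4 * al)) by (unfold Rdiv; apply Rmult_le_pos; [lra| left; apply Rinv_0_lt_compat; lra]).
    lra. }
  lra.
Qed.

Lemma am2 (C Cb x y al be : R) : Rabs C <= Cb -> 0 < al -> 0 < be -> Cb^2 <= 4 * al * be ->
  -(al * x^2 + be * y^2) <= C * x * y.
Proof.
  intros hC ha hb hd.
  assert (hCb : 0 <= Cb) by (pose proof (Rabs_pos C); lra).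
  assert (h1 : - (Cb * (Rabs x * Rabs y)) <= C * x * y).
  { pose proof (Rabs_pos x). pose proof (Rabs_pos y).
    assert (Rabs (C * x * y) <= Cb * (Rabs x * Rabs y)).
    { rewrite Rabs_mult, Rabs_mult, Rmult_assoc. apply Rmult_le_compat_r; [apply Rmult_le_pos|]; lra. }
    pose proof (Rle_abs (-(C*x*y))). rewrite Rabs_Ropp in H2. lra. }
  assert (h2 : Cb * (Rabs x * Rabs y) <= al * x^2 + be * y^2).
  { assert (ex : Rabs x ^ 2 = x ^ 2) by (rewrite RPow_abs; apply Rabs_right; apply Rle_ge; apply pow2_ge_0).
    assert (ey : Rabs y ^ 2 = y ^ 2) by (rewrite RPow_abs; apply Rabs_right; apply Rle_ge; apply pow2_ge_0).
    assert (E : 4 * al * (al * x^2 + be * y^2 - Cb * (Rabs x * Rabs y)) =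
              (2 * al * Rabs x - Cb * Rabs y)^2 + (4 * al * be - Cb^2) * y^2).
    { rewrite <- ex, <- ey. ring. }
    assert (0 <= (2 * al * Rabs x - Cb * Rabs y)^2) by apply pow2_ge_0.
    assert (0 <= (4 * al * be - Cb^2) * y^2) by (apply Rmult_le_pos; [lra| apply pow2_ge_0]).
    assert (0 <= 4 * al * (al * x^2 + be * y^2 - Cb * (Rabs x * Rabs y))) by lra.
    assert (0 <= al * x^2 + be * y^2 - Cb * (Rabs x * Rabs y)).
    { apply (Rmult_le_reg_l (4 * al)); lra. }
    lra. }
  lra.
Qed.

Lemma abs_scale (k Z z : R) : 0 <= k -> Rabs Z <= z -> Rabs (k * Z) <= k * z.
Proof. intros hk hz. rewrite Rabs_mult, (Rabs_right k) by lra. apply Rmult_le_compat_l; lra. Qed.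

Lemma abs_prod_le (a b A B : R) : Rabs a <= A -> Rabs b <= B -> Rabs (a * b) <= A * B.
Proof. intros ha hb. rewrite Rabs_mult. apply Rmult_le_compat; try apply Rabs_pos; assumption. Qed.

Lemma abs_le_of_sq (x r : R) : 0 <= r -> x^2 <= r^2 -> Rabs x <= r.
Proof. intros hr h. rewrite <- (Rabs_right r) by lra. apply Rsqr_le_abs_0. rewrite !Rsqr_pow2. exact h. Qed.

Lemma prod_sq_le (X Y r : R) : X^2 <= r^2 -> Y^2 <= r^2 -> X^2 * Y^2 * (Y^2 - X^2)^2 <= r^8.
Proof.
  intros hx hy.
  pose proof (pow2_ge_0 X). pose proof (pow2_ge_0 Y).
  assert (h1 : (Y^2 - X^2)^2 <= r^4) by nra.
  assert (h2 : X^2 * Y^2 <= r^4) by nra.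
  assert (h3 : 0 <= (Y^2 - X^2)^2) by apply pow2_ge_0.
  assert (X^2 * Y^2 * (Y^2 - X^2)^2 <= r^4 * r^4).
  { apply Rmult_le_compat; try nra. }
  replace (r^8) with (r^4 * r^4) by ring. lra.
Qed.

Lemma alg1 (f L w eta eta1 a2 X Y r : R) :
  0 < f -> 0 < L -> 0 < eta -> 0 < r -> X^2 <= r^2 -> Y^2 <= r^2 -> 0 <= r^2 - Y^2 ->
  eta1 = -2*X*(r^2 - Y^2) + 2 * (a2 * X * Y * (Y^2 - X^2) / w) ->
  w >= L * 99 / 100 ->
  (eta*L)^2 >= 10^6 * f * r^8 ->
  4 * (f / L) * (eta1 ^ 2 / eta ^ 2) <= 8 * 4 * f * r ^ 6 / (eta ^ 2 * L) + L / 4 * (a2 / L) ^ 2.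
Proof.
  intros hf hL he hr hX hY hA heta1 hw hH.
  set (k := a2 * X * Y * (Y^2 - X^2) / w) in *.
  assert (hwp : 0 < w) by lra.
  assert (hk : k^2 * w^2 = a2^2 * (X^2 * Y^2 * (Y^2 - X^2)^2)) by (unfold k; field; lra).
  assert (hk2 : k^2 * w^2 <= a2^2 * r^8).
  { rewrite hk. apply Rmult_le_compat_l; [apply pow2_ge_0| apply prod_sq_le; lra]. }
  assert (hXA : X^2 * (r^2 - Y^2)^2 <= r^6).
  { assert ((r^2 - Y^2)^2 <= r^4) by nra. pose proof (pow2_ge_0 X).
    replace (r^6) with (r^2 * r^4) by ring. apply Rmult_le_compat; try lra; apply pow2_ge_0. }
  assert (he1 : eta1^2 <= 8 * r^6 + 8 * k^2).
  { rewrite heta1. eapply Rle_trans; [apply sq_bound|]. nra. }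
  assert (hw2 : w^2 >= L^2 * (99/100)^2) by nra.
  assert (hkey : 128 * f * k^2 <= eta^2 * a2^2).
  { assert (h1 : 128 * f * (k^2 * w^2) <= 128 * f * (a2^2 * r^8)) by (apply Rmult_le_compat_l; lra).
    assert (h2 : 128 * f * r^8 <= eta^2 * w^2).
    { assert (eta^2 * w^2 >= eta^2 * (L^2 * (99/100)^2)).
      { apply Rle_ge. apply Rmult_le_compat_l; [apply pow2_ge_0| lra]. }
      assert (eta^2 * L^2 = (eta*L)^2) by ring. nra. }
    assert (h3 : 128 * f * k^2 * w^2 <= eta^2 * a2^2 * w^2).
    { assert (128 * f * (a2^2 * r^8) <= a2^2 * (eta^2 * w^2)).
      { replace (128 * f * (a2^2 * r^8)) with (a2^2 * (128 * f * r^8)) by ring.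
        apply Rmult_le_compat_l; [apply pow2_ge_0| lra]. }
      nra. }
    assert (0 < w^2) by (apply pow_lt; lra).
    apply (Rmult_le_reg_r (w^2)); [lra|]. lra. }
  assert (hgoal : 4 * f * eta1^2 <= 32 * f * r^6 + eta^2 * a2^2 / 4).
  { assert (4 * f * eta1^2 <= 4 * f * (8 * r^6 + 8 * k^2)) by (apply Rmult_le_compat_l; lra). lra. }
  assert (e1 : 4 * (f / L) * (eta1 ^ 2 / eta ^ 2) = (4 * f * eta1^2) / (eta^2 * L)) by (field; lra).
  assert (e2 : 8 * 4 * f * r ^ 6 / (eta ^ 2 * L) + L / 4 * (a2 / L) ^ 2
               = (32 * f * r^6 + eta^2 * a2^2 / 4) / (eta^2 * L)) by (field; lra).
  rewrite e1, e2. unfold Rdiv. apply Rmult_le_compat_r; [|exact hgoal].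
  left. apply Rinv_0_lt_compat. apply Rmult_lt_0_compat; [apply pow_lt|]; lra.
Qed.

Lemma alg2_E (r L w eta f M m Gu Gf gg X Y A B K l f1 u1 u2 a1 a2 c1 eta1 eta2 : R) :
  0 < r -> 1000 <= L -> w >= 99/100 * L -> 0 < eta -> eta <= r^4 -> 0 < f -> f <= M -> 0 < m ->
  eta * L >= 1000 * r^4 -> eta * L >= 1000 * f * r^4 -> eta * L >= 1000 * r^5 * Gf ->
  eta * L * m >= 1000 * M * Gu * r^3 -> gg = 32 / m / r^2 ->
  Rabs K <= r^4 -> Rabs (2*X*A) <= 2*r^3 -> Rabs (2*Y*B) <= 2*r^3 ->
  Rabs f1 <= Gf -> Rabs u1 <= Gu -> Rabs u2 <= Gu -> f = L * l ->
  eta2 = -2*Y*B + 2*K*c1/w -> eta1 = -2*X*A + 2*K*a2/w -> c1 = (f1 - a1*l)/L ->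
  4 * eta1 * L + eta * gg * u1 * L * L + eta * a1 = 0 ->
  4 * eta2 * L + eta * gg * u2 * l * L + eta * a2 = 0 ->
  Rabs eta2 <= 4 * r^3.
Proof.
  intros hr hL hw he he4 hf hfM hm hH1 hH2 hH3 hH4 hgg hK hXA hYB hf1 hu1 hu2 hfl e2 e1 ec1 C1 C2.
  assert (hLp : 0 < L) by lra. assert (hwp : 0 < w) by lra.
  assert (hl : l = f / L) by (rewrite hfl; field; lra).
  assert (hlp : 0 < l) by (rewrite hl; apply Rdiv_lt_0_compat; lra).
  assert (hGu : 0 <= Gu) by (pose proof (Rabs_pos u1); lra).
  assert (hGf : 0 <= Gf) by (pose proof (Rabs_pos f1); lra).
  assert (hggp : 0 < gg) by (rewrite hgg; apply Rdiv_lt_0_compat; [apply Rdiv_lt_0_compat; lra| apply pow_lt; lra]).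
  set (p := 2 * r^4 / w).
  assert (hpp : 0 < p) by (unfold p; apply Rdiv_lt_0_compat; [nra| lra]).
  assert (ha2' : a2 = - (4 * eta2 * L + eta * gg * u2 * l * L) / eta).
  { apply (Rmult_eq_reg_r eta); [| lra].
    replace (- (4 * eta2 * L + eta * gg * u2 * l * L) / eta * eta) with (- (4 * eta2 * L + eta * gg * u2 * l * L)) by (field; lra). lra. }
  assert (ha2 : a2 = - (4 * eta2 * L / eta + gg * u2 * f)) by (rewrite ha2', hfl; field; lra).
  assert (ha1 : a1 = - (4 * eta1 * L + eta * gg * u1 * L * L) / eta).
  { apply (Rmult_eq_reg_r eta); [| lra].
    replace (- (4 * eta1 * L + eta * gg * u1 * L * L) / eta * eta) with (- (4 * eta1 * L + eta * gg * u1 * L * L)) by (field; lra). lra. }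
  assert (hc1 : c1 = f1 / L + 4 * l * eta1 / eta + f * gg * u1).
  { rewrite ec1, ha1, hfl. field. lra. }
  assert (B2 : Rabs a2 <= 4 * L / eta * Rabs eta2 + gg * f * Gu).
  { rewrite ha2, Rabs_Ropp. eapply Rle_trans; [apply Rabs_triang|].
    apply Rplus_le_compat.
    - replace (4 * eta2 * L / eta) with ((4 * L / eta) * eta2) by (field; lra).
      rewrite Rabs_mult, (Rabs_right (4 * L / eta)) by (apply Rle_ge; apply div_nonneg; lra). lra.
    - rewrite Rabs_mult, Rabs_mult, (Rabs_right gg), (Rabs_right f) by lra.
      replace (gg * f * Gu) with (gg * Gu * f) by ring. apply Rmult_le_compat_r; [lra|].
      apply Rmult_le_compat_l; lra. }
  assert (B1 : Rabs eta1 <= 2 * r^3 + p * Rabs a2).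
  { rewrite e1. eapply Rle_trans; [apply Rabs_triang|]. apply Rplus_le_compat.
    - replace (-2 * X * A) with (- (2*X*A)) by ring. rewrite Rabs_Ropp. exact hXA.
    - replace (2 * K * a2 / w) with ((2 / w) * K * a2) by (field; lra).
      rewrite !Rabs_mult, (Rabs_right (2/w)) by (apply Rle_ge; apply div_nonneg; lra).
      unfold p. replace (2 * r^4 / w * Rabs a2) with (2 / w * r^4 * Rabs a2) by (field; lra).
      apply Rmult_le_compat_r; [apply Rabs_pos|]. apply Rmult_le_compat_l; [apply div_nonneg; lra| exact hK]. }
  assert (Bc : Rabs c1 <= Gf / L + 4 * l / eta * Rabs eta1 + f * gg * Gu).
  { rewrite hc1. eapply Rle_trans; [apply Rabs_triang|]. apply Rplus_le_compat.
    - eapply Rle_trans; [apply Rabs_triang|]. apply Rplus_le_compat.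
      + rewrite abs_div_le by lra. unfold Rdiv. apply Rmult_le_compat_r; [left; apply Rinv_0_lt_compat; lra| exact hf1].
      + replace (4 * l * eta1 / eta) with ((4 * l / eta) * eta1) by (field; lra).
        rewrite Rabs_mult, (Rabs_right (4 * l / eta)) by (apply Rle_ge; apply div_nonneg; lra). lra.
    - rewrite !Rabs_mult, (Rabs_right gg), (Rabs_right f) by lra.
      apply Rmult_le_compat_l; [nra| exact hu1]. }
  assert (Bz : Rabs eta2 <= 2 * r^3 + p * Rabs c1).
  { rewrite e2. eapply Rle_trans; [apply Rabs_triang|]. apply Rplus_le_compat.
    - replace (-2 * Y * B) with (- (2*Y*B)) by ring. rewrite Rabs_Ropp. exact hYB.
    - replace (2 * K * c1 / w) with ((2 / w) * K * c1) by (field; lra).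
      rewrite !Rabs_mult, (Rabs_right (2/w)) by (apply Rle_ge; apply div_nonneg; lra).
      unfold p. replace (2 * r^4 / w * Rabs c1) with (2 / w * r^4 * Rabs c1) by (field; lra).
      apply Rmult_le_compat_r; [apply Rabs_pos|]. apply Rmult_le_compat_l; [apply div_nonneg; lra| exact hK]. }
  set (rho := L / w).
  assert (hrho : rho <= 100/99) by (unfold rho; apply (Rmult_le_reg_r w); [lra|]; field_simplify; lra).
  assert (hrho0 : 0 < rho) by (unfold rho; apply Rdiv_lt_0_compat; lra).
  assert (hpe : p = 2 * r^4 * rho / L) by (unfold p, rho; field; lra).
  assert (hr3 : 0 < r^3) by (apply pow_lt; lra).
  assert (hr4 : 0 < r^4) by (apply pow_lt; lra).
  assert (hr5 : 0 < r^5) by (apply pow_lt; lra).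
  set (H := eta * L) in *.
  assert (hV : f * gg * Gu <= 32 * H / (1000 * r^5)).
  { rewrite hgg.
    assert (hGu' : Gu <= H * m / (1000 * M * r^3)).
    { apply (Rmult_le_reg_r (1000 * M * r^3)); [nra|]. field_simplify; nra. }
    assert (f * (32 / m / r ^ 2) * Gu <= f * (32 / m / r^2) * (H * m / (1000 * M * r^3))).
    { apply Rmult_le_compat_l; [|exact hGu']. apply Rmult_le_pos; [lra|]. apply div_nonneg; [apply div_nonneg; lra| nra]. }
    eapply Rle_trans; [exact H0|].
    replace (f * (32 / m / r ^ 2) * (H * m / (1000 * M * r ^ 3))) with ((f / M) * (32 * H / (1000 * r^5))) by (field; nra).
    assert (f / M <= 1) by (apply (Rmult_le_reg_r M); [lra|]; field_simplify; lra).
    assert (0 <= 32 * H / (1000 * r^5)) by (apply div_nonneg; nra).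
    nra. }
  assert (hV0 : 0 <= f * gg * Gu) by (apply Rmult_le_pos; [nra| exact hGu]).
  assert (hGf' : Gf <= H / (1000 * r^5)) by (apply (Rmult_le_reg_r (1000 * r^5)); [nra|]; field_simplify; nra).
  assert (hetaH : eta = H / L) by (unfold H; field; lra).
  assert (hq : 4 * l / eta = 4 * f / H) by (unfold H; rewrite hl; field; lra).
  assert (hHr : H <= r^4 * L) by (unfold H; nra).
  assert (hHp : 0 < H) by (unfold H; nra).
  assert (N1 : p * (Gf / L) <= r^3 / 100).
  { rewrite hpe. assert (p * (Gf / L) <= 2 * r^4 * rho / L * (H / (1000 * r^5) / L)).
    { rewrite <- hpe. apply Rmult_le_compat_l; [lra|]. unfold Rdiv. apply Rmult_le_compat_r; [left; apply Rinv_0_lt_compat; lra| exact hGf']. }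
    rewrite hpe in H0. eapply Rle_trans; [exact H0|].
    replace (2 * r ^ 4 * rho / L * (H / (1000 * r ^ 5) / L)) with ((2 * rho / 1000) * (H / (r * L)) / L) by (field; nra).
    assert (H / (r * L) <= r^3) by (apply (Rmult_le_reg_r (r * L)); [nra|]; field_simplify; nra).
    assert (0 <= H / (r * L)) by (apply div_nonneg; nra).
    assert ((2 * rho / 1000) * (H / (r * L)) <= (2 * (100/99) / 1000) * r^3) by (apply Rmult_le_compat; nra).
    assert (0 <= (2 * rho / 1000) * (H / (r * L))) by (apply Rmult_le_pos; [apply div_nonneg; lra| lra]).
    pose proof (div_le_self _ L H4 ltac:(lra)). lra. }
  assert (hfH : 4 * f / H <= 4 / (1000 * r^4)).
  { apply (Rmult_le_reg_r (H * (1000 * r^4))); [nra|]. field_simplify; nra. }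
  assert (hfH0 : 0 <= 4 * f / H) by (apply div_nonneg; lra).
  assert (hH2' : H * H >= 1000000 * f * r^8) by nra.
  assert (hLf : 1000 * f <= L).
  { apply (Rmult_le_reg_r (r^4)); [lra|]. nra. }
  assert (N2 : p * (4 * f / H) * (2 * r^3) <= r^3 / 100).
  { assert (p * (4 * f / H) * (2 * r^3) <= p * (4 / (1000 * r^4)) * (2 * r^3)).
    { apply Rmult_le_compat_r; [lra|]. apply Rmult_le_compat_l; lra. }
    eapply Rle_trans; [exact H0|]. rewrite hpe.
    replace (2 * r ^ 4 * rho / L * (4 / (1000 * r ^ 4)) * (2 * r ^ 3)) with ((16 * rho / 1000 * r^3) / L) by (field; nra).
    assert (0 <= 16 * rho / 1000 * r^3) by nra.
    pose proof (div_le_k _ L 1000 H1 ltac:(lra) ltac:(lra)). nra. }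
  assert (N3 : p * (4 * f / H) * p * (4 * L / eta) <= 1 / 1000).
  { replace (p * (4 * f / H) * p * (4 * L / eta)) with (64 * rho^2 * (f * r^8 / (H * H))).
    2:{ rewrite hpe, hetaH. field. nra. }
    assert (f * r^8 / (H * H) <= 1 / 1000000).
    { apply div_le_of; [nra|]. lra. }
    assert (0 <= f * r^8 / (H * H)) by (apply div_nonneg; [apply Rmult_le_pos; [lra| apply pow_le; lra]| nra]).
    assert (rho^2 <= (100/99)^2) by (apply pow_incr; lra).
    assert (rho^2 * (f * r^8 / (H * H)) <= (100/99)^2 * (1/1000000)) by (apply Rmult_le_compat; try lra; apply pow2_ge_0).
    lra. }
  assert (N4 : p * (4 * f / H) * p * (f * gg * Gu) <= r^3 / 100).
  { assert (p * (4 * f / H) * p * (f * gg * Gu) <= p * (4 * f / H) * p * (32 * H / (1000 * r^5))).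
    { apply Rmult_le_compat_l; [|exact hV]. apply Rmult_le_pos; [apply Rmult_le_pos|]; lra. }
    eapply Rle_trans; [exact H0|].
    replace (p * (4 * f / H) * p * (32 * H / (1000 * r ^ 5))) with ((512 * rho^2 / 1000 * r^3) * (f / L) / L).
    2:{ rewrite hpe. field. nra. }
    assert (f / L <= 1 / 1000) by (apply (Rmult_le_reg_r L); [lra|]; field_simplify; lra).
    assert (0 <= f / L) by (apply div_nonneg; lra).
    assert (hT : rho^2 * (f / L) <= (100/99)^2 * (1/1000)).
    { assert (rho^2 <= (100/99)^2) by (apply pow_incr; lra).
      apply Rmult_le_compat; try lra; apply pow2_ge_0. }
    assert (hT0 : 0 <= rho^2 * (f / L)) by (apply Rmult_le_pos; [apply pow2_ge_0| lra]).
    replace ((512 * rho^2 / 1000 * r^3) * (f / L)) with (r^3 * (512/1000 * (rho^2 * (f / L)))) by (field; lra).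
    assert (0 <= r^3 * (512/1000 * (rho^2 * (f / L)))) by (apply Rmult_le_pos; lra).
    pose proof (div_le_self _ L H3 ltac:(lra)).
    assert (r^3 * (512/1000 * (rho^2 * (f / L))) <= r^3 * (512/1000 * ((100/99)^2 * (1/1000)))) by (apply Rmult_le_compat_l; lra).
    lra. }
  assert (N5 : p * (f * gg * Gu) <= 7 * r^3 / 100).
  { assert (p * (f * gg * Gu) <= p * (32 * H / (1000 * r^5))) by (apply Rmult_le_compat_l; lra).
    eapply Rle_trans; [exact H0|].
    replace (p * (32 * H / (1000 * r ^ 5))) with (64 * rho / 1000 * (H / (r * L))) by (rewrite hpe; field; nra).
    assert (H / (r * L) <= r^3) by (apply (Rmult_le_reg_r (r * L)); [nra|]; field_simplify; nra).
    assert (0 <= H / (r * L)) by (apply div_nonneg; nra).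
    nra. }
  rewrite hq in Bc.
  assert (hq0 : 0 <= 4 * f / H) by lra.
  assert (S1 : p * Rabs c1 <= p * (Gf / L) + p * (4 * f / H) * Rabs eta1 + p * (f * gg * Gu)).
  { assert (p * Rabs c1 <= p * (Gf / L + 4 * f / H * Rabs eta1 + f * gg * Gu)) by (apply Rmult_le_compat_l; lra). nra. }
  assert (S2 : p * (4 * f / H) * Rabs eta1 <= p * (4 * f / H) * (2 * r^3) + p * (4 * f / H) * p * Rabs a2).
  { assert (p * (4 * f / H) * Rabs eta1 <= p * (4 * f / H) * (2 * r^3 + p * Rabs a2)) by (apply Rmult_le_compat_l; nra). nra. }
  assert (S3 : p * (4 * f / H) * p * Rabs a2 <= p * (4 * f / H) * p * (4 * L / eta) * Rabs eta2 + p * (4 * f / H) * p * (f * gg * Gu)).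
  { assert (p * (4 * f / H) * p * Rabs a2 <= p * (4 * f / H) * p * (4 * L / eta * Rabs eta2 + gg * f * Gu)).
    { apply Rmult_le_compat_l; [|exact B2]. apply Rmult_le_pos; [apply Rmult_le_pos|]; lra. }
    nra. }
  assert (S4 : p * (4 * f / H) * p * (4 * L / eta) * Rabs eta2 <= 1 / 1000 * Rabs eta2).
  { apply Rmult_le_compat_r; [apply Rabs_pos| exact N3]. }
  pose proof (Rabs_pos eta2).
  lra.
Qed.

Lemma ident (r X Y L l w a1 a2 c1 c2 bxx byy f12 : R) : w <> 0 -> L <> 0 ->
  f12 = bxx * l + a1 * c2 + a2 * c1 + L * byy - 2 * c1 * a2 ->
  let B := r^2 - X^2 in let D := Y^2 - X^2 in let K := X*Y*D in
  let q1 := 2*X + 2*X*Y*a2/w in let q2 := 2*X*Y*c1/w in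
  4 * (l * V11 r X Y w (a1 - c1) a2 bxx + L * V22 r X Y w (a2 - c2) c1 byy) =
    -8*B*L - 8*B*l + 8*l*D + 8*K*f12/w + 8*K*(a2*c1 - a1*c2)/w
    + 16*l*a2*Y*D/w - 16*l*a2*(a1 - c1)*K/w^2 + 8*l*a2^2*D^2/w^2
    + 16*L*c1*X*D/w - 16*L*c1*(a2 - c2)*K/w^2 + 8*L*c1^2*D^2/w^2
    + 16*X*l*q1 + 16*Y*L*q2 - 8*l*q1^2 - 8*L*q2^2.
Proof.
  intros hw hL hf12 B D K q1 q2. unfold V11, V22, q1, q2, K, B, D. cbv zeta.
  assert (byy = (f12 - bxx * l - a1 * c2 - a2 * c1 + 2 * c1 * a2) / L) by (rewrite hf12; field; exact hL).
  rewrite H. field. split; assumption.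
Qed.


Lemma alg3 (r m f L l w X Y eta eta2 a1 a2 c1 c2 f1 f2 f12 bxx byy e11 e22 : R) :
  0 < r -> X^2 < r^2 -> Y^2 < r^2 -> eta = (r^2 - Y^2) * (r^2 - X^2) -> 0 < m -> m <= f ->
  1000 <= L -> f = L * l -> w = L - l ->
  eta * L >= 1000 * (1 + f) * r^4 -> eta * L >= 1000 * r^5 * Rabs f1 -> eta * L >= 1000 * r^5 * Rabs f2 ->
  c1 = (f1 - a1 * l) / L -> c2 = (f2 - a2 * l) / L ->
  f12 = bxx * l + a1 * c2 + a2 * c1 + L * byy - 2 * c1 * a2 ->
  eta2 = (-2*Y + (2*c1*X*Y/w)) * (r^2 - X^2) - (r^2 - Y^2) * (2*c1*X*Y/w) ->
  e11 = V11 r X Y w (a1 - c1) a2 bxx -> e22 = V22 r X Y w (a2 - c2) c1 byy ->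
  0 <= 4 * (l * e11 + L * e22)
    + eta * (1/2 * (32/m/r^2) * f * L)
    + eta * (4 * L * (eta2/eta)^2)
    + eta * (f/(2*L)*(a1/L)^2)
    + eta * (L/4*(a2/L)^2)
    + eta * (2*4*f*r^2/(eta*L))
    + eta * (4*4*Rabs f12*r^4/(eta*L))
    + eta * (32*4*f1^2*r^4/(eta*L^3))
    + eta * (8*4*Rabs (f1*f2)*r^4/(eta*L^3))
    + eta * (24*4*Rabs f1*r^3/(eta*L))
    + eta * (6*4*Rabs f1^2*r^4/(eta*L))
    + eta * (12*4*f*r^2/(eta*L))
    + eta * (8*4*f*r^4*Rabs f2^2/(eta*L^3))
    + eta * ((48*4)^2*f*r^6/(eta^2*L))
    + eta * (32*4^2*Rabs f2^2*r^8/(eta^2*L*f)).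
Proof.
  intros hr hX hY heta hm hmf hL hfl hw hH hH1 hH2 hc1 hc2 hf12 he2 he11 he22.
  set (A := r^2 - Y^2) in *. set (B := r^2 - X^2) in *.
  assert (hA : 0 < A) by (unfold A; lra). assert (hB : 0 < B) by (unfold B; lra).
  assert (hAr : A <= r^2) by (unfold A; pose proof (pow2_ge_0 Y); lra).
  assert (hBr : B <= r^2) by (unfold B; pose proof (pow2_ge_0 X); lra).
  assert (he : 0 < eta) by (rewrite heta; apply Rmult_lt_0_compat; lra).
  assert (he4 : eta <= r^4) by (rewrite heta; replace (r^4) with (r^2*r^2) by ring; apply Rmult_le_compat; lra).
  assert (hf : 0 < f) by lra.
  assert (hLp : 0 < L) by lra.
  assert (hr2 : 0 < r^2) by (apply pow_lt; lra).
  assert (hr3 : 0 < r^3) by (apply pow_lt; lra).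
  assert (hr4 : 0 < r^4) by (apply pow_lt; lra).
  assert (hr5 : 0 < r^5) by (apply pow_lt; lra).
  assert (hr6 : 0 < r^6) by (apply pow_lt; lra).
  assert (hr8 : 0 < r^8) by (apply pow_lt; lra).
  set (H := eta * L) in *.
  assert (hHp : 0 < H) by (unfold H; nra).
  assert (hHr : H <= r^4 * L) by (unfold H; nra).
  assert (hH0 : H >= 1000 * r^4) by nra.
  assert (hHf : H >= 1000 * f * r^4) by nra.
  assert (hHH : H * H >= 1000000 * (1 + f) * r^8).
  { assert (H * H >= (1000 * (1 + f) * r^4) * (1000 * (1 + f) * r^4)) by (apply Rle_ge; apply Rmult_le_compat; nra).
    assert ((1000 * (1 + f) * r^4) * (1000 * (1 + f) * r^4) >= 1000000 * (1 + f) * r^8) by nra. lra. }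
  assert (hLf : 1000 * f <= L) by (apply (Rmult_le_reg_r (r^4)); [lra|]; nra).
  assert (hl : l = f / L) by (rewrite hfl; field; lra).
  assert (hl0 : 0 < l) by (rewrite hl; apply Rdiv_lt_0_compat; lra).
  assert (hl1 : l <= 1/1000) by (rewrite hl; apply (Rmult_le_reg_r L); [lra|]; field_simplify; lra).
  assert (hwL : w >= 99/100 * L) by lra.
  assert (hwp : 0 < w) by lra.
  set (rho := L / w).
  assert (hrho : rho <= 100/99) by (unfold rho; apply (Rmult_le_reg_r w); [lra|]; field_simplify; lra).
  assert (hrho0 : 0 < rho) by (unfold rho; apply Rdiv_lt_0_compat; lra).
  assert (hiw : / w = rho / L) by (unfold rho; field; lra).
  set (D := Y^2 - X^2).
  set (K := X * Y * D).
  assert (aX : Rabs X <= r) by (apply abs_le_of_sq; lra).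
  assert (aY : Rabs Y <= r) by (apply abs_le_of_sq; lra).
  assert (aD : Rabs D <= r^2) by (unfold D; apply Rabs_le; pose proof (pow2_ge_0 X); pose proof (pow2_ge_0 Y); lra).
  assert (aK : Rabs K <= r^4).
  { unfold K. replace (r^4) with (r * r * r^2) by ring. apply abs_prod_le; [apply abs_prod_le|]; assumption. }
  assert (hid := ident r X Y L l w a1 a2 c1 c2 bxx byy f12 ltac:(lra) ltac:(lra) hf12).
  cbv zeta in hid. fold B D in hid. fold K in hid.
  rewrite he11, he22, hid.
  assert (hT0 : eta * (1/2 * (32/m/r^2) * f * L) >= 16 * eta * L / r^2).
  { replace (eta * (1/2 * (32/m/r^2) * f * L)) with ((f/m) * (16 * eta * L / r^2)) by (unfold H; field; lra).
    assert (f / m >= 1) by (apply Rle_ge; apply (Rmult_le_reg_r m); [lra|]; field_simplify; lra).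
    assert (0 <= 16 * eta * L / r^2) by (apply div_nonneg; nra). nra. }
  assert (hT1 : eta * (4 * L * (eta2/eta)^2) = 4 * L * eta2^2 / eta) by (unfold H; field; lra).
  assert (hT2 : eta * (f/(2*L)*(a1/L)^2) = eta * f * a1^2 / (2 * L^3)) by (unfold H; field; lra).
  assert (hT3 : eta * (L/4*(a2/L)^2) = eta * a2^2 / (4 * L)) by (unfold H; field; lra).
  assert (hT4 : eta * (2*4*f*r^2/H) = 8 * f * r^2 / L) by (unfold H; field; lra).
  assert (hT5 : eta * (4*4*Rabs f12*r^4/H) = 16 * Rabs f12 * r^4 / L) by (unfold H; field; lra).
  assert (hT6 : eta * (32*4*f1^2*r^4/(eta*L^3)) = 128 * f1^2 * r^4 / L^3) by (unfold H; field; lra).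
  assert (hT7 : eta * (8*4*Rabs (f1*f2)*r^4/(eta*L^3)) = 32 * Rabs (f1*f2) * r^4 / L^3) by (unfold H; field; lra).
  assert (hT8 : eta * (24*4*Rabs f1*r^3/H) = 96 * Rabs f1 * r^3 / L) by (unfold H; field; lra).
  assert (hT9 : eta * (6*4*Rabs f1^2*r^4/H) = 24 * Rabs f1^2 * r^4 / L) by (unfold H; field; lra).
  assert (hT10 : eta * (12*4*f*r^2/H) = 48 * f * r^2 / L) by (unfold H; field; lra).
  assert (hT11 : eta * (8*4*f*r^4*Rabs f2^2/(eta*L^3)) = 32 * f * r^4 * Rabs f2^2 / L^3) by (unfold H; field; lra).
  assert (hT12 : eta * ((48*4)^2*f*r^6/(eta^2*L)) = 36864 * f * r^6 / (eta * L)) by (unfold H; field; lra).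
  assert (hT13 : eta * (32*4^2*Rabs f2^2*r^8/(eta^2*L*f)) = 512 * Rabs f2^2 * r^8 / (eta * L * f)) by (unfold H; field; lra).
  rewrite hT1, hT2, hT3, hT4, hT5, hT6, hT7, hT8, hT9, hT10, hT11, hT12, hT13.
  assert (q_fL2 : f / L^2 <= 1/1000000).
  { apply div_le_of; [nra|]. nra. }
  assert (q_fL : f / L <= 1/1000) by (apply div_le_of; lra).
  assert (q_r4LH : r^4 / (L * H) <= 1/1000000) by (apply div_le_of; nra).
  assert (q_rho2 : rho^2 <= 103/100) by nra.
  assert (q_r8HH : r^8 * (1 + f) / (H * H) <= 1/1000000) by (apply div_le_of; nra).
  assert (P2 : -(8 * f * r^2 / L) <= -8 * B * l).
  { replace (8 * f * r^2 / L) with (8 * r^2 * l) by (rewrite hl; field; lra). nra. }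
  assert (P3 : -(8 * f * r^2 / L) <= 8 * l * D).
  { replace (8 * f * r^2 / L) with (8 * r^2 * l) by (rewrite hl; field; lra).
    pose proof (abs_le_both _ _ aD). nra. }
  assert (aKf12 : Rabs (K * f12) <= r^4 * Rabs f12) by (rewrite Rabs_mult; apply Rmult_le_compat_r; [apply Rabs_pos| exact aK]).
  assert (P4 : -(16 * Rabs f12 * r^4 / L) <= 8 * K * f12 / w).
  { replace (8 * K * f12 / w) with ((8 * rho / L) * (K * f12)) by (unfold rho; field; lra).
    eapply Rle_trans; [| apply lin_lb; [apply div_nonneg; lra| exact aKf12]].
    replace (8 * rho / L * (r ^ 4 * Rabs f12)) with ((8 * rho) * (r^4 * Rabs f12 / L)) by (field; lra).
    replace (16 * Rabs f12 * r ^ 4 / L) with (16 * (r^4 * Rabs f12 / L)) by (field; lra).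
    assert (0 <= r^4 * Rabs f12 / L) by (apply div_nonneg; [apply Rmult_le_pos; [lra| apply Rabs_pos]| lra]).
    assert ((8 * rho) * (r^4 * Rabs f12 / L) <= 16 * (r^4 * Rabs f12 / L)) by (apply scal_le; lra). lra. }
  assert (P5e : 8 * K * (a2 * c1 - a1 * c2) / w = (8 * rho * K * f1 / L^2) * a2 + (-(8 * rho * K * f2 / L^2)) * a1).
  { rewrite hc1, hc2. unfold rho. field. lra. }
  assert (al3 : 0 < eta / (32 * L)) by (apply Rdiv_lt_0_compat; lra).
  assert (al2 : 0 < eta * f / (8 * L^3)) by (apply Rdiv_lt_0_compat; [apply Rmult_lt_0_compat; lra| apply Rmult_lt_0_compat; [lra| apply pow_lt; lra]]).
  assert (P5a : -(eta / (32 * L) * a2^2 + (8 * rho * r^4 * Rabs f1 / L^2)^2 / (4 * (eta / (32 * L)))) <= (8 * rho * K * f1 / L^2) * a2).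
  { apply am1; [| exact al3].
    replace (8 * rho * K * f1 / L^2) with ((8 * rho / L^2) * (K * f1)) by (field; lra).
    replace (8 * rho * r^4 * Rabs f1 / L^2) with ((8 * rho / L^2) * (r^4 * Rabs f1)) by (field; lra).
    apply abs_scale; [apply div_nonneg; [lra| apply pow_lt; lra]|]. apply abs_prod_le; [exact aK| lra]. }
  assert (P5a' : (8 * rho * r^4 * Rabs f1 / L^2)^2 / (4 * (eta / (32 * L))) <= 3 * Rabs f1^2 * r^4 / L).
  { replace ((8 * rho * r^4 * Rabs f1 / L^2)^2 / (4 * (eta / (32 * L)))) with ((512 * rho^2 * (r^4 / (L * H))) * (Rabs f1^2 * r^4 / L)).
    2:{ unfold H. field. split; lra. }
    replace (3 * Rabs f1^2 * r^4 / L) with (3 * (Rabs f1^2 * r^4 / L)) by (field; lra).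
    apply scal_le; [apply div_nonneg; [apply Rmult_le_pos; [apply pow2_ge_0| lra]| lra]|].
    assert (0 <= r^4 / (L * H)) by (apply div_nonneg; [lra| apply Rmult_lt_0_compat; lra]).
    assert (rho^2 * (r^4 / (L * H)) <= 103/100 * (1/1000000)) by (apply Rmult_le_compat; [apply pow2_ge_0| exact H0| exact q_rho2| exact q_r4LH]).
    lra. }
  assert (P5b : -(eta * f / (8 * L^3) * a1^2 + (8 * rho * r^4 * Rabs f2 / L^2)^2 / (4 * (eta * f / (8 * L^3)))) <= (-(8 * rho * K * f2 / L^2)) * a1).
  { apply am1; [| exact al2].
    replace (-(8 * rho * K * f2 / L^2)) with ((8 * rho / L^2) * (-(K * f2))) by (field; lra).
    replace (8 * rho * r^4 * Rabs f2 / L^2) with ((8 * rho / L^2) * (r^4 * Rabs f2)) by (field; lra).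
    apply abs_scale; [apply div_nonneg; [lra| apply pow_lt; lra]|]. rewrite Rabs_Ropp. apply abs_prod_le; [exact aK| lra]. }
  assert (P5b' : (8 * rho * r^4 * Rabs f2 / L^2)^2 / (4 * (eta * f / (8 * L^3))) <= 256 * Rabs f2^2 * r^8 / (eta * L * f)).
  { replace ((8 * rho * r^4 * Rabs f2 / L^2)^2 / (4 * (eta * f / (8 * L^3)))) with ((128 * rho^2) * (Rabs f2^2 * r^8 / (eta * L * f))).
    2:{ field. repeat split; lra. }
    replace (256 * Rabs f2^2 * r^8 / (eta * L * f)) with (256 * (Rabs f2^2 * r^8 / (eta * L * f))) by (field; repeat split; lra).
    apply scal_le; [apply div_nonneg; [apply Rmult_le_pos; [apply pow2_ge_0| lra]| apply Rmult_lt_0_compat; [apply Rmult_lt_0_compat|]; lra]|]. lra. }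
  assert (hL2 : 0 < L^2) by (apply pow_lt; lra).
  assert (hL3 : 0 < L^3) by (apply pow_lt; lra).
  assert (hL4 : 0 < L^4) by (apply pow_lt; lra).
  assert (hLH : 0 < L * H) by (apply Rmult_lt_0_compat; lra).
  assert (heL : 0 < eta * L) by (apply Rmult_lt_0_compat; lra).
  assert (hrho2 : 0 <= rho^2) by apply pow2_ge_0.
  assert (hrho4 : rho^4 <= 107/100).
  { replace (rho^4) with (rho^2 * rho^2) by ring.
    assert (rho^2 * rho^2 <= 103/100 * (103/100)) by (apply Rmult_le_compat; lra). lra. }
  assert (hrho40 : 0 <= rho^4) by (replace (rho^4) with ((rho^2)^2) by ring; apply pow2_ge_0).
  set (kap := 1 + f / L^2).
  assert (hkap : kap <= 1000001/1000000) by (unfold kap; lra).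
  assert (hkap0 : 0 < kap) by (unfold kap; pose proof (div_nonneg f (L^2) ltac:(lra) hL2); lra).
  assert (hkap2 : kap^2 <= 1000003/1000000) by (assert (kap^2 <= (1000001/1000000)^2) by (apply pow_incr; lra); lra).
  assert (q_fr8HH : f * r^8 / (H * H) <= 1/1000000).
  { eapply Rle_trans; [| exact q_r8HH]. apply Rmult_le_compat_r; [left; apply Rinv_0_lt_compat; apply Rmult_lt_0_compat; lra|].
    replace (r^8 * (1 + f)) with (f * r^8 + r^8) by ring. lra. }
  assert (q_fr4HL : f * r^4 / (H * L) <= 1/1000000).
  { apply div_le_of; [apply Rmult_lt_0_compat; lra|].
    assert (0 <= 1000 * f * r^4) by (apply Rmult_le_pos; lra).
    assert (H * L >= 1000 * f * r^4 * 1000) by (apply Rle_ge; apply Rmult_le_compat; lra). lra. }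
  assert (aYD : Rabs (Y * D) <= r^3) by (replace (r^3) with (r * r^2) by ring; apply abs_prod_le; assumption).
  assert (aXD : Rabs (X * D) <= r^3) by (replace (r^3) with (r * r^2) by ring; apply abs_prod_le; assumption).
  assert (aX2Y : Rabs (X^2 * Y) <= r^3).
  { replace (r^3) with (r^2 * r) by ring. apply abs_prod_le; [rewrite Rabs_right by (apply Rle_ge, pow2_ge_0); lra| exact aY]. }
  assert (aXY2 : Rabs (X * Y^2) <= r^3).
  { replace (r^3) with (r * r^2) by ring. apply abs_prod_le; [exact aX| rewrite Rabs_right by (apply Rle_ge, pow2_ge_0); lra]. }
  set (Zf := f * r^6 / (eta * L)).
  assert (hZf : 0 <= Zf) by (unfold Zf; apply div_nonneg; [apply Rmult_le_pos; lra| exact heL]).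
  assert (P6 : -(eta / (32 * L) * a2^2 + 2304 * Zf) <= 16 * l * a2 * Y * D / w).
  { replace (16 * l * a2 * Y * D / w) with ((16 * f * rho / L^2 * (Y * D)) * a2) by (rewrite hl; unfold rho; field; lra).
    eapply Rle_trans; [| apply (am1 _ (16 * f * rho / L^2 * r^3)); [| exact al3]].
    - apply Ropp_le_contravar. apply Rplus_le_compat_l.
      replace ((16 * f * rho / L ^ 2 * r ^ 3) ^ 2 / (4 * (eta / (32 * L)))) with ((2048 * rho^2 * (f / L^2)) * Zf) by (unfold Zf; field; lra).
      apply scal_le; [exact hZf|].
      assert (rho^2 * (f / L^2) <= 103/100 * (1/1000000)) by (apply Rmult_le_compat; [lra| apply div_nonneg; lra| lra| lra]). lra.
    - apply abs_scale; [apply div_nonneg; [apply Rmult_le_pos; lra| lra]| exact aYD]. }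
  assert (P7e : -16 * l * a2 * (a1 - c1) * K / w^2 =
      (-(16 * f * rho^2 * K * kap / L^3)) * a1 * a2 + (16 * f * rho^2 * K * f1 / L^4) * a2).
  { rewrite hc1, hl. unfold kap, rho. field. lra. }
  set (Cb7 := 16 * f * rho^2 * r^4 * kap / L^3).
  assert (al28 : 0 < eta * f / (16 * L^3)) by (apply Rdiv_lt_0_compat; [apply Rmult_lt_0_compat; lra| lra]).
  assert (hCb7 : Cb7^2 <= 4 * (eta * f / (16 * L^3)) * (eta / (32 * L))).
  { replace (Cb7^2) with ((256 * rho^4 * kap^2 * (f * r^8 / (H * H))) * (H * H * f / L^6)) by (unfold Cb7, H; field; lra).
    replace (4 * (eta * f / (16 * L^3)) * (eta / (32 * L))) with (1/128 * (H * H * f / L^6)) by (unfold H; field; lra).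
    apply scal_le; [apply div_nonneg; [apply Rmult_le_pos; [apply Rmult_le_pos|]; lra| apply pow_lt; lra]|].
    assert (rho^4 * kap^2 * (f * r^8 / (H * H)) <= 107/100 * (1000003/1000000) * (1/1000000)).
    { apply mul3_le; try lra. apply pow2_ge_0. apply div_nonneg; [apply Rmult_le_pos; lra| apply Rmult_lt_0_compat; lra]. }
    lra. }
  assert (P7a : -(eta * f / (16 * L^3) * a1^2 + eta / (32 * L) * a2^2) <= (-(16 * f * rho^2 * K * kap / L^3)) * a1 * a2).
  { apply (am2 _ Cb7); [| exact al28| exact al3| exact hCb7].
    unfold Cb7. replace (-(16 * f * rho^2 * K * kap / L^3)) with ((16 * f * rho^2 * kap / L^3) * (- K)) by (field; lra).
    replace (16 * f * rho ^ 2 * r ^ 4 * kap / L ^ 3) with ((16 * f * rho^2 * kap / L^3) * r^4) by (field; lra).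
    apply abs_scale; [apply div_nonneg; [apply Rmult_le_pos; [apply Rmult_le_pos|]; lra| lra]|]. rewrite Rabs_Ropp. exact aK. }
  assert (P7b : -(eta / (32 * L) * a2^2 + 3 * Rabs f1^2 * r^4 / L) <= (16 * f * rho^2 * K * f1 / L^4) * a2).
  { eapply Rle_trans; [| apply (am1 _ (16 * f * rho^2 * r^4 * Rabs f1 / L^4)); [| exact al3]].
    - apply Ropp_le_contravar. apply Rplus_le_compat_l.
      replace ((16 * f * rho^2 * r^4 * Rabs f1 / L^4) ^ 2 / (4 * (eta / (32 * L)))) with ((2048 * rho^4 * (f / L^2)^2 * (r^4 / (L * H))) * (Rabs f1^2 * r^4 / L)) by (unfold H; field; lra).
      replace (3 * Rabs f1^2 * r^4 / L) with (3 * (Rabs f1^2 * r^4 / L)) by (field; lra).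
      apply scal_le; [apply div_nonneg; [apply Rmult_le_pos; [apply pow2_ge_0| lra]| lra]|].
      assert ((f / L^2)^2 <= 1) by (assert (0 <= f / L^2) by (apply div_nonneg; lra); nra).
      assert (rho^4 * (f / L^2)^2 * (r^4 / (L * H)) <= 107/100 * 1 * (1/1000000)).
      { apply mul3_le; try lra. apply pow2_ge_0. apply div_nonneg; lra. }
      lra.
    - replace (16 * f * rho^2 * K * f1 / L^4) with ((16 * f * rho^2 / L^4) * (K * f1)) by (field; lra).
      replace (16 * f * rho^2 * r^4 * Rabs f1 / L^4) with ((16 * f * rho^2 / L^4) * (r^4 * Rabs f1)) by (field; lra).
      apply abs_scale; [apply div_nonneg; [apply Rmult_le_pos; lra| lra]|]. apply abs_prod_le; [exact aK| lra]. }
  assert (P9e : 16 * L * c1 * X * D / w = (16 * rho / L) * ((X * D) * f1) + (-(16 * f * rho / L^2 * (X * D))) * a1).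
  { rewrite hc1, hl. unfold rho. field. lra. }
  assert (P9a : -(24 * Rabs f1 * r^3 / L) <= (16 * rho / L) * ((X * D) * f1)).
  { eapply Rle_trans; [| apply (lin_lb _ _ (r^3 * Rabs f1)); [apply div_nonneg; lra| apply abs_prod_le; [exact aXD| lra]]].
    replace (16 * rho / L * (r ^ 3 * Rabs f1)) with ((16 * rho) * (Rabs f1 * r^3 / L)) by (field; lra).
    replace (24 * Rabs f1 * r ^ 3 / L) with (24 * (Rabs f1 * r^3 / L)) by (field; lra).
    assert (0 <= Rabs f1 * r^3 / L) by (apply div_nonneg; [apply Rmult_le_pos; [apply Rabs_pos| lra]| lra]).
    assert ((16 * rho) * (Rabs f1 * r^3 / L) <= 24 * (Rabs f1 * r^3 / L)) by (apply scal_le; lra). lra. }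
  assert (P9b : -(eta * f / (16 * L^3) * a1^2 + 1152 * Zf) <= (-(16 * f * rho / L^2 * (X * D))) * a1).
  { eapply Rle_trans; [| apply (am1 _ (16 * f * rho / L^2 * r^3)); [| exact al28]].
    - apply Ropp_le_contravar. apply Rplus_le_compat_l.
      replace ((16 * f * rho / L ^ 2 * r ^ 3) ^ 2 / (4 * (eta * f / (16 * L ^ 3)))) with ((1024 * rho^2) * Zf) by (unfold Zf; field; lra).
      apply scal_le; [exact hZf| lra].
    - rewrite Rabs_Ropp. apply abs_scale; [apply div_nonneg; [apply Rmult_le_pos; lra| lra]| exact aXD]. }
  assert (P10e : -16 * L * c1 * (a2 - c2) * K / w^2 =
     (-(16 * rho^2 * K * kap * f1 / L^2)) * a2 + (16 * rho^2 / L^3) * (K * (f1 * f2))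
     + (16 * rho^2 * K * kap * f / L^3) * a1 * a2 + (-(16 * rho^2 * K * f * f2 / L^4)) * a1).
  { rewrite hc1, hc2, hl. unfold kap, rho. field. lra. }
  assert (P10a : -(eta / (32 * L) * a2^2 + 3 * Rabs f1^2 * r^4 / L) <= (-(16 * rho^2 * K * kap * f1 / L^2)) * a2).
  { eapply Rle_trans; [| apply (am1 _ (16 * rho^2 * kap * r^4 * Rabs f1 / L^2)); [| exact al3]].
    - apply Ropp_le_contravar. apply Rplus_le_compat_l.
      replace ((16 * rho^2 * kap * r^4 * Rabs f1 / L^2) ^ 2 / (4 * (eta / (32 * L)))) with ((2048 * rho^4 * kap^2 * (r^4 / (L * H))) * (Rabs f1^2 * r^4 / L)) by (unfold H; field; lra).
      replace (3 * Rabs f1^2 * r^4 / L) with (3 * (Rabs f1^2 * r^4 / L)) by (field; lra).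
      apply scal_le; [apply div_nonneg; [apply Rmult_le_pos; [apply pow2_ge_0| lra]| lra]|].
      assert (rho^4 * kap^2 * (r^4 / (L * H)) <= 107/100 * (1000003/1000000) * (1/1000000)).
      { apply mul3_le; try lra. apply pow2_ge_0. apply div_nonneg; lra. }
      lra.
    - replace (-(16 * rho^2 * K * kap * f1 / L^2)) with ((16 * rho^2 * kap / L^2) * (-(K * f1))) by (field; lra).
      replace (16 * rho^2 * kap * r^4 * Rabs f1 / L^2) with ((16 * rho^2 * kap / L^2) * (r^4 * Rabs f1)) by (field; lra).
      apply abs_scale; [apply div_nonneg; [apply Rmult_le_pos; [apply Rmult_le_pos|]; lra| lra]|].
      rewrite Rabs_Ropp. apply abs_prod_le; [exact aK| lra]. }
  assert (P10b : -(32 * Rabs (f1 * f2) * r^4 / L^3) <= (16 * rho^2 / L^3) * (K * (f1 * f2))).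
  { eapply Rle_trans; [| apply (lin_lb _ _ (r^4 * Rabs (f1 * f2))); [apply div_nonneg; lra| apply abs_prod_le; [exact aK| lra]]].
    replace (16 * rho^2 / L^3 * (r ^ 4 * Rabs (f1 * f2))) with ((16 * rho^2) * (Rabs (f1 * f2) * r^4 / L^3)) by (field; lra).
    replace (32 * Rabs (f1 * f2) * r ^ 4 / L ^ 3) with (32 * (Rabs (f1 * f2) * r^4 / L^3)) by (field; lra).
    assert (0 <= Rabs (f1 * f2) * r^4 / L^3) by (apply div_nonneg; [apply Rmult_le_pos; [apply Rabs_pos| lra]| lra]).
    assert ((16 * rho^2) * (Rabs (f1 * f2) * r^4 / L^3) <= 32 * (Rabs (f1 * f2) * r^4 / L^3)) by (apply scal_le; lra). lra. }
  assert (P10c : -(eta * f / (16 * L^3) * a1^2 + eta / (32 * L) * a2^2) <= (16 * rho^2 * K * kap * f / L^3) * a1 * a2).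
  { apply (am2 _ Cb7); [| exact al28| exact al3| exact hCb7].
    unfold Cb7. replace (16 * rho^2 * K * kap * f / L^3) with ((16 * f * rho^2 * kap / L^3) * K) by (field; lra).
    replace (16 * f * rho ^ 2 * r ^ 4 * kap / L ^ 3) with ((16 * f * rho^2 * kap / L^3) * r^4) by (field; lra).
    apply abs_scale; [apply div_nonneg; [apply Rmult_le_pos; [apply Rmult_le_pos|]; lra| lra]| exact aK]. }
  assert (al216 : 0 < eta * f / (32 * L^3)) by (apply Rdiv_lt_0_compat; [apply Rmult_lt_0_compat; lra| lra]).
  assert (P10d : -(eta * f / (32 * L^3) * a1^2 + 4 * f * r^4 * Rabs f2^2 / L^3) <= (-(16 * rho^2 * K * f * f2 / L^4)) * a1).
  { eapply Rle_trans; [| apply (am1 _ (16 * rho^2 * f * r^4 * Rabs f2 / L^4)); [| exact al216]].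
    - apply Ropp_le_contravar. apply Rplus_le_compat_l.
      replace ((16 * rho^2 * f * r^4 * Rabs f2 / L^4) ^ 2 / (4 * (eta * f / (32 * L^3)))) with ((2048 * rho^4 * (r^4 / (L * H))) * (f * r^4 * Rabs f2^2 / L^3)) by (unfold H; field; lra).
      replace (4 * f * r^4 * Rabs f2^2 / L^3) with (4 * (f * r^4 * Rabs f2^2 / L^3)) by (field; lra).
      apply scal_le; [apply div_nonneg; [apply Rmult_le_pos; [apply Rmult_le_pos; lra| apply pow2_ge_0]| lra]|].
      assert (rho^4 * (r^4 / (L * H)) <= 107/100 * (1/1000000)) by (apply Rmult_le_compat; [lra| apply div_nonneg; lra| lra| lra]).
      lra.
    - replace (-(16 * rho^2 * K * f * f2 / L^4)) with ((16 * rho^2 * f / L^4) * (-(K * f2))) by (field; lra).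
      replace (16 * rho^2 * f * r^4 * Rabs f2 / L^4) with ((16 * rho^2 * f / L^4) * (r^4 * Rabs f2)) by (field; lra).
      apply abs_scale; [apply div_nonneg; [apply Rmult_le_pos; lra| lra]|].
      rewrite Rabs_Ropp. apply abs_prod_le; [exact aK| lra]. }
  assert (P12e : 16 * X * l * (2 * X + 2 * X * Y * a2 / w) = 32 * X^2 * l + (32 * f * rho / L^2 * (X^2 * Y)) * a2).
  { rewrite hl. unfold rho. field. lra. }
  assert (P12a : 0 <= 32 * X^2 * l) by (apply Rmult_le_pos; [apply Rmult_le_pos; [lra| apply pow2_ge_0]| lra]).
  assert (P12b : -(eta / (32 * L) * a2^2 + 1152 * Zf) <= (32 * f * rho / L^2 * (X^2 * Y)) * a2).
  { eapply Rle_trans; [| apply (am1 _ (32 * f * rho / L^2 * r^3)); [| exact al3]].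
    - apply Ropp_le_contravar. apply Rplus_le_compat_l.
      replace ((32 * f * rho / L ^ 2 * r ^ 3) ^ 2 / (4 * (eta / (32 * L)))) with ((8192 * rho^2 * (f / L^2)) * Zf) by (unfold Zf; field; lra).
      apply scal_le; [exact hZf|].
      assert (rho^2 * (f / L^2) <= 103/100 * (1/1000000)) by (apply Rmult_le_compat; [lra| apply div_nonneg; lra| lra| lra]). lra.
    - apply abs_scale; [apply div_nonneg; [apply Rmult_le_pos; lra| lra]| exact aX2Y]. }
  assert (P13e : 16 * Y * L * (2 * X * Y * c1 / w) = (32 * rho / L) * ((X * Y^2) * f1) + (-(32 * f * rho / L^2 * (X * Y^2))) * a1).
  { rewrite hc1, hl. unfold rho. field. lra. }
  assert (P13a : -(48 * Rabs f1 * r^3 / L) <= (32 * rho / L) * ((X * Y^2) * f1)).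
  { eapply Rle_trans; [| apply (lin_lb _ _ (r^3 * Rabs f1)); [apply div_nonneg; lra| apply abs_prod_le; [exact aXY2| lra]]].
    replace (32 * rho / L * (r ^ 3 * Rabs f1)) with ((32 * rho) * (Rabs f1 * r^3 / L)) by (field; lra).
    replace (48 * Rabs f1 * r ^ 3 / L) with (48 * (Rabs f1 * r^3 / L)) by (field; lra).
    assert (0 <= Rabs f1 * r^3 / L) by (apply div_nonneg; [apply Rmult_le_pos; [apply Rabs_pos| lra]| lra]).
    assert ((32 * rho) * (Rabs f1 * r^3 / L) <= 48 * (Rabs f1 * r^3 / L)) by (apply scal_le; lra). lra. }
  assert (P13b : -(eta * f / (16 * L^3) * a1^2 + 4608 * Zf) <= (-(32 * f * rho / L^2 * (X * Y^2))) * a1).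
  { eapply Rle_trans; [| apply (am1 _ (32 * f * rho / L^2 * r^3)); [| exact al28]].
    - apply Ropp_le_contravar. apply Rplus_le_compat_l.
      replace ((32 * f * rho / L ^ 2 * r ^ 3) ^ 2 / (4 * (eta * f / (16 * L ^ 3)))) with ((4096 * rho^2) * Zf) by (unfold Zf; field; lra).
      apply scal_le; [exact hZf| lra].
    - rewrite Rabs_Ropp. apply abs_scale; [apply div_nonneg; [apply Rmult_le_pos; lra| lra]| exact aXY2]. }
  assert (hX2Y2 : X^2 * Y^2 <= r^4).
  { replace (r^4) with (r^2 * r^2) by ring. apply Rmult_le_compat; try apply pow2_ge_0; lra. }
  assert (P14 : -(2304 * Zf + eta / (32 * L) * a2^2) <= -8 * l * (2 * X + 2 * X * Y * a2 / w)^2).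
  { assert (hq : (2 * X + 2 * X * Y * a2 / w)^2 <= 8 * X^2 + 8 * (X^2 * Y^2) * (rho^2 * a2^2 / L^2)).
    { eapply Rle_trans; [apply sq_bound|]. replace (2 * (2 * X) ^ 2 + 2 * (2 * X * Y * a2 / w) ^ 2) with (8 * X^2 + 8 * (X^2 * Y^2) * (rho^2 * a2^2 / L^2)) by (unfold rho; field; lra). lra. }
    assert (hq2 : -8 * l * (2 * X + 2 * X * Y * a2 / w)^2 >= -8 * l * (8 * X^2 + 8 * (X^2 * Y^2) * (rho^2 * a2^2 / L^2))).
    { apply Rle_ge. apply Rmult_le_compat_neg_l; [lra| exact hq]. }
    assert (h1 : 8 * l * (8 * X^2) <= 2304 * Zf).
    { replace (8 * l * (8 * X^2)) with (64 * X^2 * (f / L)) by (rewrite hl; field; lra).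
      replace Zf with ((r^4 / eta) * (r^2 * (f / L))) by (unfold Zf; field; lra).
      assert (1 <= r^4 / eta) by (apply (Rmult_le_reg_r eta); [lra|]; field_simplify; lra).
      assert (0 <= f / L) by (apply div_nonneg; lra).
      assert (X^2 * (f / L) <= r^2 * (f / L)) by (apply scal_le; lra).
      assert (0 <= r^2 * (f / L)) by (apply Rmult_le_pos; lra).
      assert (r^2 * (f / L) <= (r^4 / eta) * (r^2 * (f / L))) by (replace (r^2 * (f / L)) with (1 * (r^2 * (f / L))) at 1 by ring; apply scal_le; lra).
      lra. }
    assert (h2 : 8 * l * (8 * (X^2 * Y^2) * (rho^2 * a2^2 / L^2)) <= eta / (32 * L) * a2^2).
    { replace (8 * l * (8 * (X^2 * Y^2) * (rho^2 * a2^2 / L^2))) with ((X^2 * Y^2) * (64 * rho^2 * f * a2^2 / L^3)) by (rewrite hl; field; lra).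
      assert (0 <= 64 * rho^2 * f * a2^2 / L^3) by (apply div_nonneg; [apply Rmult_le_pos; [apply Rmult_le_pos; lra| apply pow2_ge_0]| lra]).
      assert ((X^2 * Y^2) * (64 * rho^2 * f * a2^2 / L^3) <= r^4 * (64 * rho^2 * f * a2^2 / L^3)) by (apply scal_le; lra).
      replace (r^4 * (64 * rho^2 * f * a2^2 / L^3)) with ((2048 * rho^2 * (f * r^4 / (H * L))) * (eta / (32 * L) * a2^2)) in H1 by (unfold H; field; lra).
      assert (0 <= eta / (32 * L) * a2^2) by (apply Rmult_le_pos; [lra| apply pow2_ge_0]).
      assert ((2048 * rho^2 * (f * r^4 / (H * L))) <= 1).
      { assert (rho^2 * (f * r^4 / (H * L)) <= 103/100 * (1/1000000)) by (apply Rmult_le_compat; [lra| apply div_nonneg; [apply Rmult_le_pos; lra| lra]| lra| lra]). lra. }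
      assert ((2048 * rho^2 * (f * r^4 / (H * L))) * (eta / (32 * L) * a2^2) <= 1 * (eta / (32 * L) * a2^2)) by (apply scal_le; lra).
      lra. }
    lra. }
  assert (hc1sq : c1^2 <= 2 * f1^2 / L^2 + 2 * (f^2 * a1^2) / L^4).
  { replace c1 with (f1 / L + (- (a1 * f / L^2))) by (rewrite hc1, hl; field; lra).
    eapply Rle_trans; [apply sq_bound|]. right. field. lra. }
  assert (hc1sq0 : 0 <= c1^2) by apply pow2_ge_0.
  assert (P15 : -(128 * f1^2 * r^4 / L^3 + eta * f / (32 * L^3) * a1^2) <= -8 * L * (2 * X * Y * c1 / w)^2).
  { replace (-8 * L * (2 * X * Y * c1 / w)^2) with (- ((X^2 * Y^2) * (32 * rho^2 * c1^2 / L))) by (unfold rho; field; lra).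
    assert (h0 : 0 <= 32 * rho^2 * c1^2 / L) by (apply div_nonneg; [apply Rmult_le_pos; lra| lra]).
    assert (h1 : (X^2 * Y^2) * (32 * rho^2 * c1^2 / L) <= r^4 * (32 * rho^2 * c1^2 / L)) by (apply scal_le; lra).
    assert (h2 : r^4 * (32 * rho^2 * c1^2 / L) <= (64 * rho^2 * r^4 / L) * (f1^2 / L^2) + (64 * rho^2 * r^4 / L) * (f^2 * a1^2 / L^4)).
    { replace (r^4 * (32 * rho^2 * c1^2 / L)) with ((32 * rho^2 * r^4 / L) * c1^2) by (field; lra).
      assert (0 <= 32 * rho^2 * r^4 / L) by (apply div_nonneg; [apply Rmult_le_pos; lra| lra]).
      assert ((32 * rho^2 * r^4 / L) * c1^2 <= (32 * rho^2 * r^4 / L) * (2 * f1^2 / L^2 + 2 * (f^2 * a1^2) / L^4)) by (apply Rmult_le_compat_l; lra).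
      lra. }
    assert (h3 : (64 * rho^2 * r^4 / L) * (f1^2 / L^2) <= 128 * f1^2 * r^4 / L^3).
    { replace ((64 * rho^2 * r^4 / L) * (f1^2 / L^2)) with ((64 * rho^2) * (f1^2 * r^4 / L^3)) by (field; lra).
      replace (128 * f1^2 * r^4 / L^3) with (128 * (f1^2 * r^4 / L^3)) by (field; lra).
      apply scal_le; [apply div_nonneg; [apply Rmult_le_pos; [apply pow2_ge_0| lra]| lra]| lra]. }
    assert (h4 : (64 * rho^2 * r^4 / L) * (f^2 * a1^2 / L^4) <= eta * f / (32 * L^3) * a1^2).
    { replace ((64 * rho^2 * r^4 / L) * (f^2 * a1^2 / L^4)) with ((2048 * rho^2 * (f * r^4 / (H * L))) * (eta * f / (32 * L^3) * a1^2)) by (unfold H; field; lra).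
      assert (0 <= eta * f / (32 * L^3) * a1^2) by (apply Rmult_le_pos; [lra| apply pow2_ge_0]).
      assert ((2048 * rho^2 * (f * r^4 / (H * L))) <= 1).
      { assert (rho^2 * (f * r^4 / (H * L)) <= 103/100 * (1/1000000)) by (apply Rmult_le_compat; [lra| apply div_nonneg; [apply Rmult_le_pos; lra| lra]| lra| lra]). lra. }
      assert ((2048 * rho^2 * (f * r^4 / (H * L))) * (eta * f / (32 * L^3) * a1^2) <= 1 * (eta * f / (32 * L^3) * a1^2)) by (apply scal_le; lra).
      lra. }
    lra. }
  set (dl := 2 * K * c1 / w).
  assert (he2' : eta2 = -2 * Y * B + dl) by (rewrite he2; unfold dl, K, D, A, B; field; lra).
  assert (hsq : eta2^2 >= 2 * Y^2 * B^2 - dl^2).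
  { rewrite he2'. assert (E : (-2 * Y * B + dl)^2 - (2 * Y^2 * B^2 - dl^2) = 2 * (Y * B - dl)^2) by ring.
    pose proof (pow2_ge_0 (Y * B - dl)). lra. }
  assert (hS1 : 4 * L * eta2^2 / eta >= 8 * L * Y^2 * B / A - 4 * L * dl^2 / eta).
  { replace (4 * L * eta2^2 / eta) with ((4 * L / eta) * eta2^2) by (field; lra).
    replace (8 * L * Y^2 * B / A - 4 * L * dl^2 / eta) with ((4 * L / eta) * (2 * Y^2 * B^2 - dl^2)) by (rewrite heta; field; lra).
    apply Rle_ge. apply Rmult_le_compat_l; [apply div_nonneg; lra| lra]. }
  assert (hP1 : 0 <= -8 * B * L + 16 * eta * L / r^2 + 8 * L * Y^2 * B / A).
  { assert (hY2 : Y^2 = r^2 - A) by (unfold A; ring).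
    rewrite hY2, heta.
    replace (-8 * B * L + 16 * (A * B) * L / r ^ 2 + 8 * L * (r ^ 2 - A) * B / A) with (8 * B * L * (((r^2 - A)^2 + A^2) / (A * r^2))) by (field; lra).
    apply Rmult_le_pos; [apply Rmult_le_pos; lra|]. apply div_nonneg; [pose proof (pow2_ge_0 (r^2 - A)); pose proof (pow2_ge_0 A); lra| apply Rmult_lt_0_compat; lra]. }
  assert (hK2 : K^2 <= r^8).
  { rewrite <- sq_abs. replace (r^8) with ((r^4)^2) by ring. apply pow_incr. split; [apply Rabs_pos| exact aK]. }
  assert (hR1 : 4 * L * dl^2 / eta <= 6 * Rabs f1^2 * r^4 / L + eta * f / (32 * L^3) * a1^2).
  { replace (4 * L * dl^2 / eta) with (K^2 * (16 * rho^2 * c1^2 / (L * eta))) by (unfold dl, rho; field; lra).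
    assert (h0 : 0 <= 16 * rho^2 * c1^2 / (L * eta)) by (apply div_nonneg; [apply Rmult_le_pos; lra| lra]).
    assert (h1 : K^2 * (16 * rho^2 * c1^2 / (L * eta)) <= r^8 * (16 * rho^2 * c1^2 / (L * eta))) by (apply scal_le; lra).
    assert (h2 : r^8 * (16 * rho^2 * c1^2 / (L * eta)) <= (32 * rho^2 * (r^4 / (L * H))) * (Rabs f1^2 * r^4 / L) + (32 * rho^2 * (f * r^8 / (H * H))) * (eta * f / L^3 * a1^2)).
    { replace (r^8 * (16 * rho^2 * c1^2 / (L * eta))) with ((16 * rho^2 * r^8 / (L * eta)) * c1^2) by (field; lra).
      assert (0 <= 16 * rho^2 * r^8 / (L * eta)) by (apply div_nonneg; [apply Rmult_le_pos; lra| lra]).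
      assert ((16 * rho^2 * r^8 / (L * eta)) * c1^2 <= (16 * rho^2 * r^8 / (L * eta)) * (2 * f1^2 / L^2 + 2 * (f^2 * a1^2) / L^4)) by (apply Rmult_le_compat_l; lra).
      replace ((32 * rho^2 * (r^4 / (L * H))) * (Rabs f1^2 * r^4 / L) + (32 * rho^2 * (f * r^8 / (H * H))) * (eta * f / L^3 * a1^2))
        with ((16 * rho^2 * r^8 / (L * eta)) * (2 * f1^2 / L^2 + 2 * (f^2 * a1^2) / L^4)) by (rewrite sq_abs; unfold H; field; lra).
      lra. }
    assert (h3 : (32 * rho^2 * (r^4 / (L * H))) * (Rabs f1^2 * r^4 / L) <= 6 * Rabs f1^2 * r^4 / L).
    { replace (6 * Rabs f1^2 * r^4 / L) with (6 * (Rabs f1^2 * r^4 / L)) by (field; lra).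
      apply scal_le; [apply div_nonneg; [apply Rmult_le_pos; [apply pow2_ge_0| lra]| lra]|].
      assert (rho^2 * (r^4 / (L * H)) <= 103/100 * (1/1000000)) by (apply Rmult_le_compat; [lra| apply div_nonneg; lra| lra| lra]). lra. }
    assert (h4 : (32 * rho^2 * (f * r^8 / (H * H))) * (eta * f / L^3 * a1^2) <= eta * f / (32 * L^3) * a1^2).
    { replace (eta * f / (32 * L^3) * a1^2) with (1/32 * (eta * f / L^3 * a1^2)) by (field; lra).
      apply scal_le; [apply Rmult_le_pos; [apply div_nonneg; [apply Rmult_le_pos; lra| lra]| apply pow2_ge_0]|].
      assert (rho^2 * (f * r^8 / (H * H)) <= 103/100 * (1/1000000)) by (apply Rmult_le_compat; [lra| apply div_nonneg; [apply Rmult_le_pos; lra| apply Rmult_lt_0_compat; lra]| lra| lra]). lra. }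
    lra. }
  assert (P8 : 0 <= 8 * l * a2^2 * D^2 / w^2).
  { apply div_nonneg; [apply Rmult_le_pos; [apply Rmult_le_pos; [apply Rmult_le_pos; lra| apply pow2_ge_0]| apply pow2_ge_0]| apply pow_lt; lra]. }
  assert (P11 : 0 <= 8 * L * c1^2 * D^2 / w^2).
  { apply div_nonneg; [apply Rmult_le_pos; [apply Rmult_le_pos; [apply Rmult_le_pos; lra| apply pow2_ge_0]| apply pow2_ge_0]| apply pow_lt; lra]. }
  assert (hf1a : f1^2 = Rabs f1^2) by (rewrite sq_abs; reflexivity).
  assert (ea2 : eta / (32 * L) * a2^2 = 1/8 * (eta * a2^2 / (4 * L))) by (field; lra).
  assert (ea18 : eta * f / (8 * L^3) * a1^2 = 1/4 * (eta * f * a1^2 / (2 * L^3))) by (field; lra).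
  assert (ea116 : eta * f / (16 * L^3) * a1^2 = 1/8 * (eta * f * a1^2 / (2 * L^3))) by (field; lra).
  assert (ea132 : eta * f / (32 * L^3) * a1^2 = 1/16 * (eta * f * a1^2 / (2 * L^3))) by (field; lra).
  assert (eZf : 36864 * f * r^6 / (eta * L) = 36864 * Zf) by (unfold Zf; field; lra).
  assert (hS9 : 0 <= Rabs f1^2 * r^4 / L) by (apply div_nonneg; [apply Rmult_le_pos; [apply pow2_ge_0| lra]| lra]).
  assert (hS8 : 0 <= Rabs f1 * r^3 / L) by (apply div_nonneg; [apply Rmult_le_pos; [apply Rabs_pos| lra]| lra]).
  assert (hS11 : 0 <= f * r^4 * Rabs f2^2 / L^3) by (apply div_nonneg; [apply Rmult_le_pos; [apply Rmult_le_pos; lra| apply pow2_ge_0]| lra]).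
  assert (hS13 : 0 <= Rabs f2^2 * r^8 / (eta * L * f)) by (apply div_nonneg; [apply Rmult_le_pos; [apply pow2_ge_0| lra]| apply Rmult_lt_0_compat; lra]).
  assert (hS2 : 0 <= eta * f * a1^2 / (2 * L^3)) by (apply div_nonneg; [apply Rmult_le_pos; [apply Rmult_le_pos; lra| apply pow2_ge_0]| lra]).
  assert (hS3 : 0 <= eta * a2^2 / (4 * L)) by (apply div_nonneg; [apply Rmult_le_pos; [lra| apply pow2_ge_0]| lra]).
  assert (hS10 : 0 <= f * r^2 / L) by (apply div_nonneg; [apply Rmult_le_pos; lra| lra]).
  assert (hS5 : 0 <= Rabs f12 * r^4 / L) by (apply div_nonneg; [apply Rmult_le_pos; [apply Rabs_pos| lra]| lra]).
  assert (hS7 : 0 <= Rabs (f1 * f2) * r^4 / L^3) by (apply div_nonneg; [apply Rmult_le_pos; [apply Rabs_pos| lra]| lra]).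
  assert (hS6 : 0 <= f1^2 * r^4 / L^3) by (apply div_nonneg; [apply Rmult_le_pos; [apply pow2_ge_0| lra]| lra]).

  lra.
Qed.


Lemma final_alg (r m M Gf Gu X Y L l f f1 f2 f12 u1 u2 a1 a2 c1 c2 bxx byy
    eta eta1 eta2 e11 e22 : R) :
  0 < r -> 0 < m -> m <= f <= M -> r^2 - X^2 > 0 -> r^2 - Y^2 > 0 ->
  0 < L -> f = L * l ->
  Rabs f1 <= Gf -> Rabs f2 <= Gf -> Rabs u1 <= Gu -> Rabs u2 <= Gu ->
  eta * L >= 10 ^ 3 * (1 + M + r * Gf + M / m * (Gu / r)) * r ^ 4 ->
  f1 = a1 * l + L * c1 -> f2 = a2 * l + L * c2 ->
  f12 = bxx * l + a1 * c2 + a2 * c1 + L * byy - 2 * c1 * a2 ->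
  eta = (r^2 - Y^2) * (r^2 - X^2) ->
  eta1 = (-2*X + (2*X + 2*a2*X*Y/(L - l))) * (r^2 - X^2) - (r^2 - Y^2) * (2*X + 2*a2*X*Y/(L - l)) ->
  eta2 = (-2*Y + (2*c1*X*Y/(L - l))) * (r^2 - X^2) - (r^2 - Y^2) * (2*c1*X*Y/(L - l)) ->
  e11 = V11 r X Y (L - l) (a1 - c1) a2 bxx ->
  e22 = V22 r X Y (L - l) (a2 - c2) c1 byy ->
  4 * eta1 * L + eta * (32 / m / r ^ 2) * u1 * L * L + eta * a1 = 0 ->
  4 * eta2 * L + eta * (32 / m / r ^ 2) * u2 * l * L + eta * a2 = 0 ->
  let beta := 4 in let gg := 32 / m / r ^ 2 in let l1 := L in
    beta * (f / l1) * (eta1 ^ 2 / eta ^ 2)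
      <= 8 * beta * f * r ^ 6 / (eta ^ 2 * l1) + l1 / 4 * (a2 / l1) ^ 2 /\
    beta * f * gg * (eta2 / eta) * u2
      >= - (4 * beta * f * gg * (r ^ 4 / eta) * (Rabs u2 / r)) /\
    beta * (f / l1 * (e11 / eta) + l1 * (e22 / eta))
      >= - (1 / 2) * gg * f * l1
         - beta * l1 * (eta2 / eta) ^ 2
         - f / (2 * l1) * (a1 / l1) ^ 2
         - l1 / 4 * (a2 / l1) ^ 2
         - 2 * beta * f * r ^ 2 / (eta * l1)
         - 4 * beta * Rabs f12 * r ^ 4 / (eta * l1)
         - 32 * beta * f1 ^ 2 * r ^ 4 / (eta * l1 ^ 3)
         - 8 * beta * Rabs (f1 * f2) * r ^ 4 / (eta * l1 ^ 3)
         - 24 * beta * Rabs f1 * r ^ 3 / (eta * l1)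
         - 6 * beta * Rabs f1 ^ 2 * r ^ 4 / (eta * l1)
         - 12 * beta * f * r ^ 2 / (eta * l1)
         - 8 * beta * f * r ^ 4 * Rabs f2 ^ 2 / (eta * l1 ^ 3)
         - (48 * beta) ^ 2 * f * r ^ 6 / (eta ^ 2 * l1)
         - 32 * beta ^ 2 * Rabs f2 ^ 2 * r ^ 8 / (eta ^ 2 * l1 * f).
Proof.
  intros hr hm [hmf hfM] hXr hYr hL0 hfl hf1 hf2 hu1 hu2 hmain hF1 hF2 hF12 heta heta1 heta2 he11 he22 hC1 hC2.
  cbv zeta.
  assert (hGf : 0 <= Gf) by (pose proof (Rabs_pos f1); lra).
  assert (hGu : 0 <= Gu) by (pose proof (Rabs_pos u1); lra).
  assert (hf : 0 < f) by lra.
  assert (he : 0 < eta) by (rewrite heta; apply Rmult_lt_0_compat; lra).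
  assert (he4 : eta <= r^4).
  { rewrite heta. replace (r^4) with (r^2 * r^2) by ring.
    apply Rmult_le_compat; try lra; pose proof (pow2_ge_0 X); pose proof (pow2_ge_0 Y); lra. }
  assert (hr4 : 0 < r^4) by (apply pow_lt; lra).
  assert (hr3 : 0 < r^3) by (apply pow_lt; lra).
  assert (hrG : 0 <= r * Gf) by (apply Rmult_le_pos; lra).
  assert (hMG : 0 <= M / m * (Gu / r)) by (apply Rmult_le_pos; apply div_nonneg; lra).
  assert (hH0 : eta * L >= 1000 * (1 + f) * r^4).
  { assert (10^3 * (1 + f) * r^4 <= 10 ^ 3 * (1 + M + r * Gf + M / m * (Gu / r)) * r ^ 4).
    { apply Rmult_le_compat_r; [lra|]. apply Rmult_le_compat_l; lra. }
    replace (10^3) with 1000 in H by ring. lra. }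
  assert (hHG : eta * L >= 1000 * r^5 * Gf).
  { assert (10^3 * (r * Gf) * r^4 <= 10 ^ 3 * (1 + M + r * Gf + M / m * (Gu / r)) * r ^ 4).
    { apply Rmult_le_compat_r; [lra|]. apply Rmult_le_compat_l; lra. }
    replace (10^3 * (r * Gf) * r^4) with (1000 * r^5 * Gf) in H by ring. lra. }
  assert (hHU : eta * L * m >= 1000 * M * Gu * r^3).
  { assert (10^3 * (M / m * (Gu / r)) * r^4 <= 10 ^ 3 * (1 + M + r * Gf + M / m * (Gu / r)) * r ^ 4).
    { apply Rmult_le_compat_r; [lra|]. apply Rmult_le_compat_l; lra. }
    replace (10^3 * (M / m * (Gu / r)) * r^4) with ((1000 * M * Gu * r^3) / m) in H by (field; lra).
    apply Rle_ge. apply (Rmult_le_reg_r (/ m)); [apply Rinv_0_lt_compat; lra|].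
    replace (eta * L * m * / m) with (eta * L) by (field; lra). lra. }
  assert (hL : 1000 <= L).
  { destruct (Rle_or_lt 1000 L) as [h|h]; [exact h|].
    assert (eta * L <= r^4 * L) by (apply Rmult_le_compat_r; lra).
    assert (r^4 * L < r^4 * 1000) by (apply Rmult_lt_compat_l; lra).
    assert (1000 * (1 + f) * r^4 >= 1000 * r^4) by nra. lra. }
  assert (hl : l = f / L) by (rewrite hfl; field; lra).
  assert (hLf : 1000 * f <= L).
  { assert (1000 * f * r^4 <= eta * L) by nra.
    assert (eta * L <= r^4 * L) by (apply Rmult_le_compat_r; lra).
    apply (Rmult_le_reg_r (r^4)); [lra|]. lra. }
  assert (hl1 : l <= 1/1000) by (rewrite hl; apply div_le_of; lra).
  assert (hl0 : 0 < l) by (rewrite hl; apply Rdiv_lt_0_compat; lra).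
  assert (hw : L - l >= 99/100 * L) by lra.
  assert (hc1 : c1 = (f1 - a1 * l) / L) by (rewrite hF1; field; lra).
  assert (hc2 : c2 = (f2 - a2 * l) / L) by (rewrite hF2; field; lra).
  split; [|split].
  -
    apply (alg1 f L (L - l) eta eta1 a2 X Y r); try lra.
    { assert (eta * L >= 1000 * r^4) by nra.
      assert (eta * L >= 1000 * f * r^4) by nra.
      assert ((eta * L)^2 >= (1000 * r^4) * (1000 * f * r^4)).
      { replace ((eta * L)^2) with ((eta * L) * (eta * L)) by ring. apply Rle_ge, Rmult_le_compat; try nra. }
      nra. }
  -
    assert (hE := alg2_E r L (L - l) eta f M m Gu Gf (32 / m / r^2) X Y (r^2 - Y^2) (r^2 - X^2) (X * Y * (Y^2 - X^2))
                 l f1 u1 u2 a1 a2 c1 eta1 eta2 hr hL hw he he4 hf hfM hm ltac:(nra) ltac:(nra) hHG hHU eq_refl).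
    assert (aX : Rabs X <= r) by (apply abs_le_of_sq; lra).
    assert (aY : Rabs Y <= r) by (apply abs_le_of_sq; lra).
    assert (aD : Rabs (Y^2 - X^2) <= r^2).
    { apply Rabs_le. pose proof (pow2_ge_0 X); pose proof (pow2_ge_0 Y); lra. }
    assert (aK : Rabs (X * Y * (Y^2 - X^2)) <= r^4).
    { replace (r^4) with (r * r * r^2) by ring. apply abs_prod_le; [apply abs_prod_le|]; assumption. }
    assert (aXA : Rabs (2 * X * (r^2 - Y^2)) <= 2 * r^3).
    { replace (2 * X * (r^2 - Y^2)) with (2 * (X * (r^2 - Y^2))) by ring.
      replace (2 * r^3) with (2 * (r * r^2)) by ring. apply abs_scale; [lra|]. apply abs_prod_le; [exact aX|].
      rewrite Rabs_right by lra. pose proof (pow2_ge_0 Y); lra. }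
    assert (aYB : Rabs (2 * Y * (r^2 - X^2)) <= 2 * r^3).
    { replace (2 * Y * (r^2 - X^2)) with (2 * (Y * (r^2 - X^2))) by ring.
      replace (2 * r^3) with (2 * (r * r^2)) by ring. apply abs_scale; [lra|]. apply abs_prod_le; [exact aY|].
      rewrite Rabs_right by lra. pose proof (pow2_ge_0 X); lra. }
    specialize (hE aK aXA aYB hf1 hu1 hu2 hfl).
    specialize (hE ltac:(rewrite heta2; field; lra) ltac:(rewrite heta1; field; lra) hc1 hC1 hC2).
    assert (hgg : 0 < 32 / m / r^2) by (apply Rdiv_lt_0_compat; [apply Rdiv_lt_0_compat; lra| apply pow_lt; lra]).
    assert (hk : 0 <= 4 * f * (32 / m / r^2) / eta) by (apply div_nonneg; [apply Rmult_le_pos; lra| lra]).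
    replace (4 * f * (32 / m / r ^ 2) * (eta2 / eta) * u2) with ((4 * f * (32 / m / r^2) / eta) * (eta2 * u2)) by (field; lra).
    replace (- (4 * 4 * f * (32 / m / r ^ 2) * (r ^ 4 / eta) * (Rabs u2 / r))) with ((4 * f * (32 / m / r^2) / eta) * (- (4 * r^3 * Rabs u2))) by (field; lra).
    apply Rle_ge. apply Rmult_le_compat_l; [exact hk|].
    assert (Rabs (eta2 * u2) <= 4 * r^3 * Rabs u2) by (rewrite Rabs_mult; apply Rmult_le_compat_r; [apply Rabs_pos| exact hE]).
    pose proof (abs_le_both _ _ H). lra.
  -
    assert (h3 := alg3 r m f L l (L - l) X Y eta eta2 a1 a2 c1 c2 f1 f2 f12 bxx byy e11 e22
                  hr ltac:(lra) ltac:(lra) heta hm hmf hL hfl eq_refl hH0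
                  ltac:(pose proof (Rmult_le_compat_l (1000 * r^5) _ _ ltac:(pose proof (pow_lt r 5 hr); lra) hf1); lra)
                  ltac:(pose proof (Rmult_le_compat_l (1000 * r^5) _ _ ltac:(pose proof (pow_lt r 5 hr); lra) hf2); lra)
                  hc1 hc2 hF12 heta2 he11 he22).
    set (Sx := 4 * (l * e11 + L * e22) + eta * (1/2 * (32/m/r^2) * f * L)
    + eta * (4 * L * (eta2/eta)^2)
    + eta * (f/(2*L)*(a1/L)^2)
    + eta * (L/4*(a2/L)^2)
    + eta * (2*4*f*r^2/(eta*L))
    + eta * (4*4*Rabs f12*r^4/(eta*L))
    + eta * (32*4*f1^2*r^4/(eta*L^3))
    + eta * (8*4*Rabs (f1*f2)*r^4/(eta*L^3))
    + eta * (24*4*Rabs f1*r^3/(eta*L))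
    + eta * (6*4*Rabs f1^2*r^4/(eta*L))
    + eta * (12*4*f*r^2/(eta*L))
    + eta * (8*4*f*r^4*Rabs f2^2/(eta*L^3))
    + eta * ((48*4)^2*f*r^6/(eta^2*L))
    + eta * (32*4^2*Rabs f2^2*r^8/(eta^2*L*f))) in h3.
    match goal with |- ?LHS >= ?RHS => assert (E : LHS - RHS = Sx / eta) end.
    { unfold Sx. rewrite hl. field. lra. }
    assert (0 <= Sx / eta) by (apply div_nonneg; lra).
    lra.
Qed.


Lemma abs_le_sqrt2 (a b : R) : Rabs a <= sqrt (a^2 + b^2) /\ Rabs b <= sqrt (a^2 + b^2).
Proof.
  split.
  - rewrite <- sqrt_Rsqr_abs. apply sqrt_le_1_alt. rewrite Rsqr_pow2. nra.
  - rewrite <- sqrt_Rsqr_abs. apply sqrt_le_1_alt. rewrite Rsqr_pow2. nra.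
Qed.

Lemma ball_nbhd (Rad x0 y0 : R) : 0 < Rad -> in_ball Rad x0 y0 ->
  exists d, 0 < d /\ forall x y, (x - x0)^2 + (y - y0)^2 < d^2 -> in_ball Rad x y.
Proof.
  unfold in_ball. intros hR h.
  set (e := Rad * Rad - (x0 * x0 + y0 * y0)).
  assert (he : 0 < e) by (unfold e; lra).
  exists (Rmin Rad (e / (4 * Rad))). split.
  - apply Rmin_pos; [lra|]. apply Rdiv_lt_0_compat; lra.
  - intros x y hxy.
    set (d := Rmin Rad (e / (4 * Rad))) in *.
    assert (hd1 : d <= Rad) by apply Rmin_l.
    assert (hd2 : d <= e / (4 * Rad)) by apply Rmin_r.
    assert (hd0 : 0 < d) by (apply Rmin_pos; [lra|]; apply Rdiv_lt_0_compat; lra).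
    assert (hd3 : 4 * Rad * d <= e).
    { apply (Rmult_le_compat_l (4 * Rad)) in hd2; [|lra].
      replace (4 * Rad * (e / (4 * Rad))) with e in hd2 by (field; lra). lra. }
    set (dx := x - x0) in *. set (dy := y - y0) in *.
    replace x with (x0 + dx) by (unfold dx; ring).
    replace y with (y0 + dy) by (unfold dy; ring).
    assert (hcs : (x0 * dx + y0 * dy)^2 <= (x0*x0 + y0*y0) * (dx^2 + dy^2)).
    { assert (E : (x0*x0+y0*y0)*(dx^2+dy^2) - (x0*dx+y0*dy)^2 = (x0*dy - y0*dx)^2) by ring.
      pose proof (pow2_ge_0 (x0*dy - y0*dx)). lra. }
    assert (hcs2 : (x0 * dx + y0 * dy)^2 < (Rad * d)^2).
    { assert ((x0*x0 + y0*y0) * (dx^2 + dy^2) <= (Rad*Rad) * (dx^2+dy^2)).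
      { apply Rmult_le_compat_r; [nra| lra]. }
      assert ((Rad*Rad) * (dx^2+dy^2) < (Rad * Rad) * d^2).
      { apply Rmult_lt_compat_l; [nra| lra]. }
      replace ((Rad * d)^2) with ((Rad*Rad)*d^2) by ring. lra. }
    assert (hcs3 : x0 * dx + y0 * dy < Rad * d).
    { destruct (Rlt_or_le (x0 * dx + y0 * dy) 0) as [hn|hp]; [nra|].
      apply Rsqr_incrst_0; [rewrite !Rsqr_pow2; exact hcs2| exact hp| nra]. }
    assert (d*d <= Rad*d) by (apply Rmult_le_compat_r; lra).
    assert (dx^2 + dy^2 < Rad * d) by (replace (d^2) with (d*d) in hxy by ring; lra).
    assert (E: (x0+dx)*(x0+dx)+(y0+dy)*(y0+dy) = x0*x0+y0*y0 + 2*(x0*dx+y0*dy) + (dx^2+dy^2)) by ring.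
    rewrite E. unfold e in hd3. lra.
Qed.

Lemma shift_x (x0 y0 d x y s : R) : 0 < d -> (x - x0)^2 + (y - y0)^2 < (d/2)^2 ->
  Rabs (s - x) < d/4 -> (s - x0)^2 + (y - y0)^2 < d^2.
Proof.
  intros hd h hs. apply Rabs_def2 in hs.
  assert ((s - x0)^2 <= 2 * (s - x)^2 + 2 * (x - x0)^2).
  { assert (E : 2 * (s - x)^2 + 2 * (x - x0)^2 - (s - x0)^2 = ((s-x) - (x-x0))^2) by ring.
    pose proof (pow2_ge_0 ((s-x) - (x-x0))). lra. }
  assert ((s - x)^2 < (d/4)^2).
  { assert (E : (d/4)^2 - (s-x)^2 = (d/4 - (s-x)) * (d/4 + (s-x))) by ring.
    assert (0 < (d/4 - (s-x)) * (d/4 + (s-x))) by (apply Rmult_lt_0_compat; lra). lra. }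
  assert (E2 : (d/2)^2 = d^2/4) by field. assert (E3 : (d/4)^2 = d^2/16) by field.
  assert (0 < d^2) by (apply pow_lt; lra). pose proof (pow2_ge_0 (y-y0)). pose proof (pow2_ge_0 (x-x0)). lra.
Qed.

Lemma shift_y (x0 y0 d x y s : R) : 0 < d -> (x - x0)^2 + (y - y0)^2 < (d/2)^2 ->
  Rabs (s - y) < d/4 -> (x - x0)^2 + (s - y0)^2 < d^2.
Proof.
  intros hd h hs. apply Rabs_def2 in hs.
  assert ((s - y0)^2 <= 2 * (s - y)^2 + 2 * (y - y0)^2).
  { assert (E : 2 * (s - y)^2 + 2 * (y - y0)^2 - (s - y0)^2 = ((s-y) - (y-y0))^2) by ring.
    pose proof (pow2_ge_0 ((s-y) - (y-y0))). lra. }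
  assert ((s - y)^2 < (d/4)^2).
  { assert (E : (d/4)^2 - (s-y)^2 = (d/4 - (s-y)) * (d/4 + (s-y))) by ring.
    assert (0 < (d/4 - (s-y)) * (d/4 + (s-y))) by (apply Rmult_lt_0_compat; lra). lra. }
  assert (E2 : (d/2)^2 = d^2/4) by field. assert (E3 : (d/4)^2 = d^2/16) by field.
  assert (0 < d^2) by (apply pow_lt; lra). pose proof (pow2_ge_0 (y-y0)). pose proof (pow2_ge_0 (x-x0)). lra.
Qed.

Lemma locally_of_abs (x : R) (P : R -> Prop) (d : R) : 0 < d ->
  (forall s, Rabs (s - x) < d -> P s) -> locally x P.
Proof.
  intros hd h. exists (mkposreal d hd). intros s hs. apply h. exact hs.
Qed.

Lemma deriv_uniq (f : R -> R) (x l1 l2 : R) : is_derive f x l1 -> is_derive f x l2 -> l1 = l2.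
Proof. intros h1 h2. rewrite <- (is_derive_unique _ _ _ h1). apply is_derive_unique. exact h2. Qed.

Lemma det_deriv (A B C : R -> R) (s A' B' C' : R) :
  is_derive A s A' -> is_derive B s B' -> is_derive C s C' ->
  is_derive (fun t => A t * C t - B t ^ 2) s (A' * C s + A s * C' - 2 * B s * B').
Proof.
  intros hA hB hC. auto_derive.
  - repeat split; eexists; eassumption.
  - replace (Derive (fun x : R => A x) s) with A' by (symmetry; apply is_derive_unique; exact hA).
    replace (Derive (fun x : R => B x) s) with B' by (symmetry; apply is_derive_unique; exact hB).
    replace (Derive (fun x : R => C x) s) with C' by (symmetry; apply is_derive_unique; exact hC).
    ring.
Qed.

Lemma det2_deriv (P Q R0 S T V : R -> R) (s P' Q' R' S' T' V' : R) :
  is_derive P s P' -> is_derive Q s Q' -> is_derive R0 s R' -> is_derive S s S' ->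
  is_derive T s T' -> is_derive V s V' ->
  is_derive (fun t => P t * Q t + R0 t * S t - 2 * T t * V t) s
    (P' * Q s + P s * Q' + R' * S s + R0 s * S' - 2 * (T' * V s + T s * V')).
Proof.
  intros hP hQ hR hS hT hV. auto_derive.
  - repeat split; eexists; eassumption.
  - replace (Derive (fun x : R => P x) s) with P' by (symmetry; apply is_derive_unique; exact hP).
    replace (Derive (fun x : R => Q x) s) with Q' by (symmetry; apply is_derive_unique; exact hQ).
    replace (Derive (fun x : R => R0 x) s) with R' by (symmetry; apply is_derive_unique; exact hR).
    replace (Derive (fun x : R => S x) s) with S' by (symmetry; apply is_derive_unique; exact hS).
    replace (Derive (fun x : R => T x) s) with T' by (symmetry; apply is_derive_unique; exact hT).
    replace (Derive (fun x : R => V x) s) with V' by (symmetry; apply is_derive_unique; exact hV).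
    ring.
Qed.

Lemma sig1_ex (Q : R -> R) (r y x : R) : ex_derive Q x ->
  ex_derive (fun s => r^2 - (s^2 + y^2) + Q s) x.
Proof. intros h. auto_derive. repeat split; try exact h. Qed.
Lemma sig1y_ex (Q : R -> R) (r y x : R) : ex_derive Q x ->
  ex_derive (fun s => r^2 - (y^2 + s^2) + Q s) x.
Proof. intros h. auto_derive. repeat split; try exact h. Qed.
Lemma sig2_ex (Q : R -> R) (r x : R) : ex_derive Q x ->
  ex_derive (fun s => r^2 - Q s) x.
Proof. intros h. auto_derive. repeat split; try exact h. Qed.

Lemma qE_ex_derive_y (x : R) (A B C : R -> R) (s A' B' C' : R) :
  is_derive A s A' -> is_derive B s B' -> is_derive C s C' -> 0 < SE (A s) (B s) (C s) ->
  ex_derive (fun t => qE x t (A t) (B t) (C t)) s.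
Proof.
  intros hA hB hC hS. unfold qE, NE, SE in *. auto_derive.
  assert (0 < sqrt ((A s + - C s) * ((A s + - C s) * 1) + 4 * (B s * (B s * 1)))) by (apply sqrt_lt_R0; nra).
  repeat split; try solve [eexists; eassumption | nra | apply Rgt_not_eq; lra | apply Rgt_not_eq; repeat apply Rmult_lt_0_compat; lra].
Qed.

Lemma pos_near (g : R -> R) (x : R) : ex_derive g x -> 0 < g x ->
  exists d, 0 < d /\ forall s, Rabs (s - x) < d -> 0 < g s.
Proof.
  intros he hp. destruct (cont_of_is_derive g x _ (Derive_correct _ _ he) (g x) hp) as [d [dp hd]].
  exists d; split; [exact dp|]. intros s hs. specialize (hd s hs). apply Rabs_def2 in hd. lra.
Qed.

Theorem lemma3p1
  (Rad m M : R) (U F : nat -> nat -> R -> R -> R) (t1 t2 : R -> R -> R)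
  (Gf Gu : R) (x0 y0 : R) :
  let r := Rad / sqrt 2 in
  let beta := 4 in
  let c0 := 32 / m in
  0 < Rad ->
  (* u in C^4(B_R(0)), convex, det D^2 u = f *)
  Ck_family (in_ball Rad) 4 U ->
  convex_on_ball Rad (U 0%nat 0%nat) ->
  (forall x y, in_ball Rad x y ->
     U 2%nat 0%nat x y * U 0%nat 2%nat x y - U 1%nat 1%nat x y ^ 2 = F 0%nat 0%nat x y) ->
  (* f in C^2, 0 < m <= f <= M *)
  Ck_family (in_ball Rad) 2 F ->
  0 < m ->
  (forall x y, in_ball Rad x y -> m <= F 0%nat 0%nat x y <= M) ->
  (* Gf = sup |grad f|, Gu = sup |Du| over B_R(0) *)
  is_lub (fun z => exists x y, in_ball Rad x y /\
            z = sqrt (F 1%nat 0%nat x y ^ 2 + F 0%nat 1%nat x y ^ 2)) Gf ->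
  is_lub (fun z => exists x y, in_ball Rad x y /\
            z = sqrt (U 1%nat 0%nat x y ^ 2 + U 0%nat 1%nat x y ^ 2)) Gu ->
  (* tau: continuous unit eigenvector field for the largest eigenvalue *)
  cont2_on (in_ball Rad) t1 -> cont2_on (in_ball Rad) t2 ->
  (forall x y, in_ball Rad x y ->
     top_unit_eigvec (U 2%nat 0%nat x y) (U 1%nat 1%nat x y) (U 0%nat 2%nat x y)
       (t1 x y) (t2 x y)) ->
  (* x0 maximizes phi over Sigma *)
  in_Sigma Rad r t1 t2 x0 y0 ->
  (forall x y, in_Sigma Rad r t1 t2 x y ->
     phi_fun r c0 U t1 t2 x y <= phi_fun r c0 U t1 t2 x0 y0) ->
  (* coordinates: D^2u(x0) diagonal, lambda1 = u11 >= lambda2 = u22, tau(x0) = (1,0) *)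
  U 1%nat 1%nat x0 y0 = 0 ->
  U 2%nat 0%nat x0 y0 >= U 0%nat 2%nat x0 y0 ->
  t1 x0 y0 = 1 -> t2 x0 y0 = 0 ->
  (* main assumption *)
  eta_fun r t1 t2 x0 y0 * U 2%nat 0%nat x0 y0 >=
    10 ^ 3 * (1 + M + r * Gf + M / m * (Gu / r)) * r ^ 4 ->
  (* conclusion: eta has first partials E1, E2 near x0 and second partials e11, e22 at x0,
     and the three estimates hold at x0 *)
  exists (E1 E2 : R -> R -> R) (del e11 e22 : R),
    del > 0 /\
    (forall x y, (x - x0) ^ 2 + (y - y0) ^ 2 < del ^ 2 ->
       derivable_pt_lim (fun s => eta_fun r t1 t2 s y) x (E1 x y) /\
       derivable_pt_lim (fun t => eta_fun r t1 t2 x t) y (E2 x y)) /\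
    derivable_pt_lim (fun s => E1 s y0) x0 e11 /\
    derivable_pt_lim (fun t => E2 x0 t) y0 e22 /\
    let eta := eta_fun r t1 t2 x0 y0 in
    let eta1 := E1 x0 y0 in
    let eta2 := E2 x0 y0 in
    let l1 := U 2%nat 0%nat x0 y0 in
    let f := F 0%nat 0%nat x0 y0 in
    let f1 := F 1%nat 0%nat x0 y0 in
    let f2 := F 0%nat 1%nat x0 y0 in
    let f12 := F 1%nat 1%nat x0 y0 in
    let u2 := U 0%nat 1%nat x0 y0 in
    let u111 := U 3%nat 0%nat x0 y0 in
    let u112 := U 2%nat 1%nat x0 y0 in
    let gg := c0 / r ^ 2 in
    beta * (f / l1) * (eta1 ^ 2 / eta ^ 2)
      <= 8 * beta * f * r ^ 6 / (eta ^ 2 * l1) + l1 / 4 * (u112 / l1) ^ 2 /\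
    beta * f * gg * (eta2 / eta) * u2
      >= - (4 * beta * f * gg * (r ^ 4 / eta) * (Rabs u2 / r)) /\
    beta * (f / l1 * (e11 / eta) + l1 * (e22 / eta))
      >= - (1 / 2) * gg * f * l1
         - beta * l1 * (eta2 / eta) ^ 2
         - f / (2 * l1) * (u111 / l1) ^ 2
         - l1 / 4 * (u112 / l1) ^ 2
         - 2 * beta * f * r ^ 2 / (eta * l1)
         - 4 * beta * Rabs f12 * r ^ 4 / (eta * l1)
         - 32 * beta * f1 ^ 2 * r ^ 4 / (eta * l1 ^ 3)
         - 8 * beta * Rabs (f1 * f2) * r ^ 4 / (eta * l1 ^ 3)
         - 24 * beta * Rabs f1 * r ^ 3 / (eta * l1)
         - 6 * beta * Rabs f1 ^ 2 * r ^ 4 / (eta * l1)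
         - 12 * beta * f * r ^ 2 / (eta * l1)
         - 8 * beta * f * r ^ 4 * Rabs f2 ^ 2 / (eta * l1 ^ 3)
         - (48 * beta) ^ 2 * f * r ^ 6 / (eta ^ 2 * l1)
         - 32 * beta ^ 2 * Rabs f2 ^ 2 * r ^ 8 / (eta ^ 2 * l1 * f).
Proof.
  intros r beta c0 hRad hU hconv hdet hF hm hfb hGf hGu ht1c ht2c hev hS0 hmax hb0 hLc ht1 ht2 hmain.
  assert (hr : 0 < r).
  { unfold r. apply Rdiv_lt_0_compat; [lra| apply sqrt_lt_R0; lra]. }
  assert (hS0' := hS0).
  destruct hS0 as [hball0 [hA0 hB0]].
  rewrite ht1, ht2 in hA0, hB0.
  assert (hA : r^2 - y0^2 > 0) by (replace (r^2 - y0^2) with (r ^ 2 - (x0 ^ 2 + y0 ^ 2) + (x0 * 1 + y0 * 0) ^ 2) by ring; exact hA0).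
  assert (hB : r^2 - x0^2 > 0) by (replace (r^2 - x0^2) with (r ^ 2 - (x0 * 1 + y0 * 0) ^ 2) by ring; exact hB0).
  assert (heta0 : eta_fun r t1 t2 x0 y0 = (r^2 - y0^2) * (r^2 - x0^2)).
  { unfold eta_fun. rewrite ht1, ht2. ring. }
  destruct (hfb x0 y0 hball0) as [hfm hfM].
  assert (hfv : F 0%nat 0%nat x0 y0 = U 2%nat 0%nat x0 y0 * U 0%nat 2%nat x0 y0).
  { rewrite <- (hdet x0 y0 hball0). rewrite hb0. ring. }
  destruct hGf as [hGf _]. destruct hGu as [hGu _].
  assert (hGf0 : sqrt (F 1%nat 0%nat x0 y0 ^ 2 + F 0%nat 1%nat x0 y0 ^ 2) <= Gf).
  { apply hGf. exists x0, y0. split; [exact hball0| reflexivity]. }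
  assert (hGu0 : sqrt (U 1%nat 0%nat x0 y0 ^ 2 + U 0%nat 1%nat x0 y0 ^ 2) <= Gu).
  { apply hGu. exists x0, y0. split; [exact hball0| reflexivity]. }
  destruct (abs_le_sqrt2 (F 1%nat 0%nat x0 y0) (F 0%nat 1%nat x0 y0)) as [hf1G hf2G].
  destruct (abs_le_sqrt2 (U 1%nat 0%nat x0 y0) (U 0%nat 1%nat x0 y0)) as [hu1G hu2G].
  assert (hGfp : 0 <= Gf) by (pose proof (Rabs_pos (F 1%nat 0%nat x0 y0)); lra).
  assert (hGup : 0 <= Gu) by (pose proof (Rabs_pos (U 1%nat 0%nat x0 y0)); lra).
  set (L := U 2%nat 0%nat x0 y0) in *.
  set (lc := U 0%nat 2%nat x0 y0) in *.
  assert (hwpos : 0 < L /\ 0 < L - lc).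
  { rewrite heta0 in hmain.
    assert (hMm : 0 <= M / m * (Gu / r)).
    { apply Rmult_le_pos; [apply Rdiv_le_0_compat; lra| apply Rdiv_le_0_compat; lra]. }
    assert (hrg : 0 <= r * Gf) by (apply Rmult_le_pos; lra).
    assert (hr4 : 0 < r^4) by (apply pow_lt; lra).
    assert (hK : 10^3 * (1 + M) * r^4 <= 10 ^ 3 * (1 + M + r * Gf + M / m * (Gu / r)) * r ^ 4).
    { apply Rmult_le_compat_r; [lra|]. apply Rmult_le_compat_l; lra. }
    assert (hA2 : r^2 - y0^2 <= r^2) by nra.
    assert (hB2 : r^2 - x0^2 <= r^2) by nra.
    assert (heta4 : (r^2 - y0^2) * (r^2 - x0^2) <= r^4).
    { replace (r^4) with (r^2 * r^2) by ring. apply Rmult_le_compat; lra. }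
    assert (heta_pos : 0 < (r^2 - y0^2) * (r^2 - x0^2)) by (apply Rmult_lt_0_compat; lra).
    assert (hL1 : 10^3 * (1 + M) <= L).
    { destruct (Rle_or_lt (10^3 * (1 + M)) L) as [h|h]; [exact h|].
      exfalso. assert (0 < L \/ L <= 0) as [hL|hL] by lra.
      - assert ((r^2 - y0^2) * (r^2 - x0^2) * L <= r^4 * L) by (apply Rmult_le_compat_r; lra).
        assert (r^4 * L < r^4 * (10^3 * (1 + M))) by (apply Rmult_lt_compat_l; lra). lra.
      - assert ((r^2 - y0^2) * (r^2 - x0^2) * L <= 0) by (apply Rmult_le_0_l; lra). nra. }
    assert (hLp : 0 < L) by lra.
    split; [exact hLp|].
    assert (hlc : lc = F 0%nat 0%nat x0 y0 / L) by (rewrite hfv; field; lra).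
    rewrite hlc. apply (Rmult_lt_reg_r L); [lra|]. 
    replace ((L - F 0%nat 0%nat x0 y0 / L) * L) with (L * L - F 0%nat 0%nat x0 y0) by (field; lra).
    nra. }
  destruct hwpos as [hLp hw].
  destruct hU as [hUd hUc].
  destruct hF as [hFd hFc].
  assert (heps : 0 < (L - lc) / 3) by lra.
  destruct (hUc 2%nat 0%nat ltac:(lia) x0 y0 hball0 _ heps) as [da [dap hda]].
  destruct (hUc 0%nat 2%nat ltac:(lia) x0 y0 hball0 _ heps) as [dc [dcp hdc]].
  destruct (ball_nbhd Rad x0 y0 hRad hball0) as [db [dbp hdb]].
  set (del0 := Rmin db (Rmin da dc)).
  assert (hdel0 : 0 < del0) by (apply Rmin_pos; [lra| apply Rmin_pos; lra]).
  assert (hG : forall x y, (x - x0)^2 + (y - y0)^2 < del0^2 ->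
            in_ball Rad x y /\ 0 < U 2%nat 0%nat x y - U 0%nat 2%nat x y).
  { intros x y hxy.
    assert (h1 : del0 <= db) by apply Rmin_l.
    assert (h2 : del0 <= da) by (eapply Rle_trans; [apply Rmin_r| apply Rmin_l]).
    assert (h3 : del0 <= dc) by (eapply Rle_trans; [apply Rmin_r| apply Rmin_r]).
    assert (hsq : forall z, del0 <= z -> del0^2 <= z^2) by (intros z hz; apply pow_incr; lra).
    assert (hb : in_ball Rad x y) by (apply hdb; pose proof (hsq _ h1); lra).
    split; [exact hb|].
    assert (ha' := hda x y hb ltac:(pose proof (hsq _ h2); lra)).
    assert (hc' := hdc x y hb ltac:(pose proof (hsq _ h3); lra)).
    apply Rabs_def2 in ha'. apply Rabs_def2 in hc'. fold L lc in ha', hc'. lra. }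
  assert (hSE : forall x y, (x - x0)^2 + (y - y0)^2 < del0^2 ->
            0 < SE (U 2%nat 0%nat x y) (U 1%nat 1%nat x y) (U 0%nat 2%nat x y)).
  { intros x y hxy. destruct (hG x y hxy) as [_ h]. unfold SE.
    pose proof (pow2_ge_0 (U 1%nat 1%nat x y)).
    assert (0 < (U 2%nat 0%nat x y - U 0%nat 2%nat x y)^2) by (apply pow_lt; lra). lra. }
  assert (hEta : forall x y, (x - x0)^2 + (y - y0)^2 < del0^2 ->
     eta_fun r t1 t2 x y = etaE r x y (U 2%nat 0%nat x y) (U 1%nat 1%nat x y) (U 0%nat 2%nat x y)).
  { intros x y hxy. destruct (hG x y hxy) as [hb _].
    destruct (eig_facts _ _ _ _ _ x y (hev x y hb) (hSE x y hxy)) as [e1 _].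
    unfold eta_fun, etaE. rewrite e1. reflexivity. }
  assert (hPhi : forall x y, (x - x0)^2 + (y - y0)^2 < del0^2 ->
     phi_fun r c0 U t1 t2 x y =
       etaE r x y (U 2%nat 0%nat x y) (U 1%nat 1%nat x y) (U 0%nat 2%nat x y) ^ 4 *
       exp (c0 / r^2 * (/ 2 * (U 1%nat 0%nat x y ^ 2 + U 0%nat 1%nat x y ^ 2))) *
       ((U 2%nat 0%nat x y + U 0%nat 2%nat x y +
         sqrt ((U 2%nat 0%nat x y - U 0%nat 2%nat x y)^2 + 4 * U 1%nat 1%nat x y ^ 2)) / 2)).
  { intros x y hxy. destruct (hG x y hxy) as [hb _].
    destruct (eig_facts _ _ _ _ _ x y (hev x y hb) (hSE x y hxy)) as [_ e2].
    unfold phi_fun, g_fun. rewrite <- (hEta x y hxy). rewrite e2. unfold SE.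
    replace (c0 * (/ 2 * (U 1%nat 0%nat x y ^ 2 + U 0%nat 1%nat x y ^ 2)) / r ^ 2)
      with (c0 / r^2 * (/ 2 * (U 1%nat 0%nat x y ^ 2 + U 0%nat 1%nat x y ^ 2))) by (field; lra).
    reflexivity. }
  assert (dUx : forall i j x y, (i + j < 4)%nat -> in_ball Rad x y ->
            is_derive (fun s => U i j s y) x (U (S i) j x y)).
  { intros i j x y hij hb. apply is_derive_Reals. exact (proj1 (hUd i j x y hij hb)). }
  assert (dUy : forall i j x y, (i + j < 4)%nat -> in_ball Rad x y ->
            is_derive (fun t => U i j x t) y (U i (S j) x y)).
  { intros i j x y hij hb. apply is_derive_Reals. exact (proj2 (hUd i j x y hij hb)). }
  assert (dFx : forall i j x y, (i + j < 2)%nat -> in_ball Rad x y ->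
            is_derive (fun s => F i j s y) x (F (S i) j x y)).
  { intros i j x y hij hb. apply is_derive_Reals. exact (proj1 (hFd i j x y hij hb)). }
  assert (dFy : forall i j x y, (i + j < 2)%nat -> in_ball Rad x y ->
            is_derive (fun t => F i j x t) y (F i (S j) x y)).
  { intros i j x y hij hb. apply is_derive_Reals. exact (proj2 (hFd i j x y hij hb)). }
  assert (hG0 : (x0 - x0)^2 + (y0 - y0)^2 < del0^2).
  { replace ((x0 - x0)^2 + (y0 - y0)^2) with 0 by ring. apply pow_lt; lra. }
  assert (hball0' : in_ball Rad x0 y0) by exact hball0.
  set (E1 := fun x y => etaD r x y (U 2%nat 0%nat x y) (U 1%nat 1%nat x y) (U 0%nat 2%nat x y)
                1 0 (U 3%nat 0%nat x y) (U 2%nat 1%nat x y) (U 1%nat 2%nat x y)).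
  set (E2 := fun x y => etaD r x y (U 2%nat 0%nat x y) (U 1%nat 1%nat x y) (U 0%nat 2%nat x y)
                0 1 (U 2%nat 1%nat x y) (U 1%nat 2%nat x y) (U 0%nat 3%nat x y)).
  assert (hD1 : forall x y, (x - x0)^2 + (y - y0)^2 < (del0/2)^2 ->
     is_derive (fun s => eta_fun r t1 t2 s y) x (E1 x y)).
  { intros x y hxy.
    assert (hxyG : (x - x0)^2 + (y - y0)^2 < del0^2) by (pose proof (shift_x x0 y0 del0 x y x hdel0 hxy); apply H; rewrite Rminus_diag, Rabs_R0; lra).
    destruct (hG x y hxyG) as [hb _].
    apply (is_derive_ext_loc (fun s => etaE r s y (U 2%nat 0%nat s y) (U 1%nat 1%nat s y) (U 0%nat 2%nat s y))).
    - apply (locally_of_abs x _ (del0/4)); [lra|]. intros s hs.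
      symmetry. apply hEta. apply (shift_x x0 y0 del0 x y s hdel0 hxy hs).
    - apply (etaE_deriv r (fun s => s) (fun _ => y) (fun s => U 2%nat 0%nat s y)
               (fun s => U 1%nat 1%nat s y) (fun s => U 0%nat 2%nat s y) x 1 0).
      + auto_derive; auto.
      + auto_derive; auto.
      + apply dUx; [lia| exact hb].
      + apply dUx; [lia| exact hb].
      + apply dUx; [lia| exact hb].
      + apply hSE; exact hxyG. }
  assert (hD2 : forall x y, (x - x0)^2 + (y - y0)^2 < (del0/2)^2 ->
     is_derive (fun t => eta_fun r t1 t2 x t) y (E2 x y)).
  { intros x y hxy.
    assert (hxyG : (x - x0)^2 + (y - y0)^2 < del0^2) by (pose proof (shift_y x0 y0 del0 x y y hdel0 hxy); apply H; rewrite Rminus_diag, Rabs_R0; lra).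
    destruct (hG x y hxyG) as [hb _].
    apply (is_derive_ext_loc (fun t => etaE r x t (U 2%nat 0%nat x t) (U 1%nat 1%nat x t) (U 0%nat 2%nat x t))).
    - apply (locally_of_abs y _ (del0/4)); [lra|]. intros s hs.
      symmetry. apply hEta. apply (shift_y x0 y0 del0 x y s hdel0 hxy hs).
    - apply (etaE_deriv r (fun _ => x) (fun t => t) (fun t => U 2%nat 0%nat x t)
               (fun t => U 1%nat 1%nat x t) (fun t => U 0%nat 2%nat x t) y 0 1).
      + auto_derive; auto.
      + auto_derive; auto.
      + apply dUy; [lia| exact hb].
      + apply dUy; [lia| exact hb].
      + apply dUy; [lia| exact hb].
      + apply hSE; exact hxyG. }
  assert (hetaE0 : etaE r x0 y0 L (U 1%nat 1%nat x0 y0) lc = (r^2 - y0^2) * (r^2 - x0^2)).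
  { rewrite hb0. apply etaE_b0. exact hw. }
  set (eta0 := (r^2 - y0^2) * (r^2 - x0^2)) in *.
  assert (heta0p : 0 < eta0) by (unfold eta0; apply Rmult_lt_0_compat; lra).
  (* critical point, x-direction *)
  assert (hC1 : 4 * E1 x0 y0 * L + eta0 * (c0 / r^2) * U 1%nat 0%nat x0 y0 * L * L
                + eta0 * U 3%nat 0%nat x0 y0 = 0).
  { set (Ph := fun s => etaE r s y0 (U 2%nat 0%nat s y0) (U 1%nat 1%nat s y0) (U 0%nat 2%nat s y0) ^ 4 *
       exp (c0 / r^2 * (/ 2 * (U 1%nat 0%nat s y0 ^ 2 + U 0%nat 1%nat s y0 ^ 2))) *
       ((U 2%nat 0%nat s y0 + U 0%nat 2%nat s y0 +
         sqrt ((U 2%nat 0%nat s y0 - U 0%nat 2%nat s y0)^2 + 4 * U 1%nat 1%nat s y0 ^ 2)) / 2)).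
    assert (hder : is_derive Ph x0
      (etaE r x0 y0 L (U 1%nat 1%nat x0 y0) lc ^ 3 *
       exp (c0 / r^2 * (/ 2 * (U 1%nat 0%nat x0 y0 ^ 2 + U 0%nat 1%nat x0 y0 ^ 2))) *
       (4 * E1 x0 y0 * L + etaE r x0 y0 L (U 1%nat 1%nat x0 y0) lc * (c0 / r^2) *
          (U 1%nat 0%nat x0 y0 * L + U 0%nat 1%nat x0 y0 * U 1%nat 1%nat x0 y0) * L
        + etaE r x0 y0 L (U 1%nat 1%nat x0 y0) lc * U 3%nat 0%nat x0 y0))).
    { apply (phi_deriv (c0 / r^2) (fun s => etaE r s y0 (U 2%nat 0%nat s y0) (U 1%nat 1%nat s y0) (U 0%nat 2%nat s y0))
        (fun s => U 1%nat 0%nat s y0) (fun s => U 0%nat 1%nat s y0)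
        (fun s => U 2%nat 0%nat s y0) (fun s => U 1%nat 1%nat s y0) (fun s => U 0%nat 2%nat s y0) x0
        (E1 x0 y0) (U 2%nat 0%nat x0 y0) (U 1%nat 1%nat x0 y0) (U 3%nat 0%nat x0 y0) (U 2%nat 1%nat x0 y0) (U 1%nat 2%nat x0 y0)).
      - apply (etaE_deriv r (fun s => s) (fun _ => y0) (fun s => U 2%nat 0%nat s y0)
               (fun s => U 1%nat 1%nat s y0) (fun s => U 0%nat 2%nat s y0) x0 1 0).
        + auto_derive; auto.
        + auto_derive; auto.
        + apply dUx; [lia| exact hball0].
        + apply dUx; [lia| exact hball0].
        + apply dUx; [lia| exact hball0].
        + apply hSE; exact hG0.
      - apply dUx; [lia| exact hball0].
      - apply dUx; [lia| exact hball0].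
      - apply dUx; [lia| exact hball0].
      - apply dUx; [lia| exact hball0].
      - apply dUx; [lia| exact hball0].
      - exact hb0.
      - exact hw. }
    set (Q := fun s => qE s y0 (U 2%nat 0%nat s y0) (U 1%nat 1%nat s y0) (U 0%nat 2%nat s y0)).
    assert (hQd : ex_derive Q x0).
    { apply (qE_ex_derive y0 (fun s => U 2%nat 0%nat s y0) (fun s => U 1%nat 1%nat s y0) (fun s => U 0%nat 2%nat s y0)
         x0 (U 3%nat 0%nat x0 y0) (U 2%nat 1%nat x0 y0) (U 1%nat 2%nat x0 y0)).
      all: try (apply dUx; [lia| exact hball0]). apply hSE; exact hG0. }
    assert (hQ0 : Q x0 = x0^2) by (unfold Q; rewrite hb0; apply qE_b0; exact hw).
    destruct (pos_near (fun s => r^2 - (s^2 + y0^2) + Q s) x0 (sig1_ex Q r y0 x0 hQd)) as [d1 [d1p hd1]].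
    { rewrite hQ0. lra. }
    destruct (pos_near (fun s => r^2 - Q s) x0 (sig2_ex Q r x0 hQd)) as [d2 [d2p hd2]].
    { rewrite hQ0. lra. }
    set (d := Rmin del0 (Rmin d1 d2)).
    assert (hdp : 0 < d) by (apply Rmin_pos; [lra| apply Rmin_pos; lra]).
    assert (hmx : forall s, Rabs (s - x0) < d -> Ph s <= Ph x0).
    { intros s hs.
      assert (hs0 : Rabs (s - x0) < del0) by (eapply Rlt_le_trans; [exact hs| apply Rmin_l]).
      assert (hs1 : Rabs (s - x0) < d1) by (eapply Rlt_le_trans; [exact hs| eapply Rle_trans; [apply Rmin_r| apply Rmin_l]]).
      assert (hs2 : Rabs (s - x0) < d2) by (eapply Rlt_le_trans; [exact hs| eapply Rle_trans; [apply Rmin_r| apply Rmin_r]]).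
      assert (hsG : (s - x0)^2 + (y0 - y0)^2 < del0^2).
      { assert (hs0' := hs0). apply Rabs_def2 in hs0'.
        assert (E: del0^2 - (s-x0)^2 = (del0-(s-x0))*(del0+(s-x0))) by ring.
        assert (0 < (del0-(s-x0))*(del0+(s-x0))) by (apply Rmult_lt_0_compat; lra).
        replace ((y0 - y0)^2) with 0 by ring. lra. }
      destruct (hG s y0 hsG) as [hbs _].
      destruct (eig_facts _ _ _ _ _ s y0 (hev s y0 hbs) (hSE s y0 hsG)) as [eq1 _].
      assert (hsig : in_Sigma Rad r t1 t2 s y0).
      { split; [exact hbs|]. rewrite eq1. split.
        - apply Rlt_gt. exact (hd1 s hs1).
        - apply Rlt_gt. exact (hd2 s hs2). }
      unfold Ph. rewrite <- (hPhi s y0 hsG), <- (hPhi x0 y0 hG0). apply hmax. exact hsig. }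
    assert (hz := max_deriv0 Ph x0 _ d (proj1 (is_derive_Reals _ _ _) hder) hdp hmx).
    rewrite hetaE0, hb0 in hz. fold eta0 in hz.
    assert (hex : 0 < exp (c0 / r^2 * (/ 2 * (U 1%nat 0%nat x0 y0 ^ 2 + U 0%nat 1%nat x0 y0 ^ 2)))) by apply exp_pos.
    assert (he3 : 0 < eta0 ^ 3) by (apply pow_lt; lra).
    assert (hprod : 0 < eta0 ^ 3 * exp (c0 / r^2 * (/ 2 * (U 1%nat 0%nat x0 y0 ^ 2 + U 0%nat 1%nat x0 y0 ^ 2))))
      by (apply Rmult_lt_0_compat; lra).
    apply Rmult_integral in hz. destruct hz as [hz|hz]; [lra|].
    rewrite <- hz. ring. }
  (* critical point, y-direction *)
  assert (hC2 : 4 * E2 x0 y0 * L + eta0 * (c0 / r^2) * U 0%nat 1%nat x0 y0 * lc * L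
                + eta0 * U 2%nat 1%nat x0 y0 = 0).
  { set (Ph := fun s => etaE r x0 s (U 2%nat 0%nat x0 s) (U 1%nat 1%nat x0 s) (U 0%nat 2%nat x0 s) ^ 4 *
       exp (c0 / r^2 * (/ 2 * (U 1%nat 0%nat x0 s ^ 2 + U 0%nat 1%nat x0 s ^ 2))) *
       ((U 2%nat 0%nat x0 s + U 0%nat 2%nat x0 s +
         sqrt ((U 2%nat 0%nat x0 s - U 0%nat 2%nat x0 s)^2 + 4 * U 1%nat 1%nat x0 s ^ 2)) / 2)).
    assert (hder : is_derive Ph y0
      (etaE r x0 y0 L (U 1%nat 1%nat x0 y0) lc ^ 3 *
       exp (c0 / r^2 * (/ 2 * (U 1%nat 0%nat x0 y0 ^ 2 + U 0%nat 1%nat x0 y0 ^ 2))) *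
       (4 * E2 x0 y0 * L + etaE r x0 y0 L (U 1%nat 1%nat x0 y0) lc * (c0 / r^2) *
          (U 1%nat 0%nat x0 y0 * U 1%nat 1%nat x0 y0 + U 0%nat 1%nat x0 y0 * lc) * L
        + etaE r x0 y0 L (U 1%nat 1%nat x0 y0) lc * U 2%nat 1%nat x0 y0))).
    { apply (phi_deriv (c0 / r^2) (fun s => etaE r x0 s (U 2%nat 0%nat x0 s) (U 1%nat 1%nat x0 s) (U 0%nat 2%nat x0 s))
        (fun s => U 1%nat 0%nat x0 s) (fun s => U 0%nat 1%nat x0 s)
        (fun s => U 2%nat 0%nat x0 s) (fun s => U 1%nat 1%nat x0 s) (fun s => U 0%nat 2%nat x0 s) y0
        (E2 x0 y0) (U 1%nat 1%nat x0 y0) (U 0%nat 2%nat x0 y0) (U 2%nat 1%nat x0 y0) (U 1%nat 2%nat x0 y0) (U 0%nat 3%nat x0 y0)).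
      - apply (etaE_deriv r (fun _ => x0) (fun s => s) (fun s => U 2%nat 0%nat x0 s)
               (fun s => U 1%nat 1%nat x0 s) (fun s => U 0%nat 2%nat x0 s) y0 0 1).
        + auto_derive; auto.
        + auto_derive; auto.
        + apply dUy; [lia| exact hball0].
        + apply dUy; [lia| exact hball0].
        + apply dUy; [lia| exact hball0].
        + apply hSE; exact hG0.
      - apply dUy; [lia| exact hball0].
      - apply dUy; [lia| exact hball0].
      - apply dUy; [lia| exact hball0].
      - apply dUy; [lia| exact hball0].
      - apply dUy; [lia| exact hball0].
      - exact hb0.
      - exact hw. }
    set (Q := fun s => qE x0 s (U 2%nat 0%nat x0 s) (U 1%nat 1%nat x0 s) (U 0%nat 2%nat x0 s)).
    assert (hQd : ex_derive Q y0).
    { apply (qE_ex_derive_y x0 (fun s => U 2%nat 0%nat x0 s) (fun s => U 1%nat 1%nat x0 s) (fun s => U 0%nat 2%nat x0 s)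
         y0 (U 2%nat 1%nat x0 y0) (U 1%nat 2%nat x0 y0) (U 0%nat 3%nat x0 y0)).
      all: try (apply dUy; [lia| exact hball0]). apply hSE; exact hG0. }
    assert (hQ0 : Q y0 = x0^2) by (unfold Q; rewrite hb0; apply qE_b0; exact hw).
    destruct (pos_near (fun s => r^2 - (x0^2 + s^2) + Q s) y0 (sig1y_ex Q r x0 y0 hQd)) as [d1 [d1p hd1]].
    { rewrite hQ0. lra. }
    destruct (pos_near (fun s => r^2 - Q s) y0 (sig2_ex Q r y0 hQd)) as [d2 [d2p hd2]].
    { rewrite hQ0. lra. }
    set (d := Rmin del0 (Rmin d1 d2)).
    assert (hdp : 0 < d) by (apply Rmin_pos; [lra| apply Rmin_pos; lra]).
    assert (hmx : forall s, Rabs (s - y0) < d -> Ph s <= Ph y0).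
    { intros s hs.
      assert (hs0 : Rabs (s - y0) < del0) by (eapply Rlt_le_trans; [exact hs| apply Rmin_l]).
      assert (hs1 : Rabs (s - y0) < d1) by (eapply Rlt_le_trans; [exact hs| eapply Rle_trans; [apply Rmin_r| apply Rmin_l]]).
      assert (hs2 : Rabs (s - y0) < d2) by (eapply Rlt_le_trans; [exact hs| eapply Rle_trans; [apply Rmin_r| apply Rmin_r]]).
      assert (hsG : (x0 - x0)^2 + (s - y0)^2 < del0^2).
      { assert (hs0' := hs0). apply Rabs_def2 in hs0'.
        assert (E: del0^2 - (s-y0)^2 = (del0-(s-y0))*(del0+(s-y0))) by ring.
        assert (0 < (del0-(s-y0))*(del0+(s-y0))) by (apply Rmult_lt_0_compat; lra).
        replace ((x0 - x0)^2) with 0 by ring. lra. }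
      destruct (hG x0 s hsG) as [hbs _].
      destruct (eig_facts _ _ _ _ _ x0 s (hev x0 s hbs) (hSE x0 s hsG)) as [eq1 _].
      assert (hsig : in_Sigma Rad r t1 t2 x0 s).
      { split; [exact hbs|]. rewrite eq1. split.
        - apply Rlt_gt. exact (hd1 s hs1).
        - apply Rlt_gt. exact (hd2 s hs2). }
      unfold Ph. rewrite <- (hPhi x0 s hsG), <- (hPhi x0 y0 hG0). apply hmax. exact hsig. }
    assert (hz := max_deriv0 Ph y0 _ d (proj1 (is_derive_Reals _ _ _) hder) hdp hmx).
    rewrite hetaE0, hb0 in hz. fold eta0 in hz.
    assert (hex : 0 < exp (c0 / r^2 * (/ 2 * (U 1%nat 0%nat x0 y0 ^ 2 + U 0%nat 1%nat x0 y0 ^ 2)))) by apply exp_pos.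
    assert (he3 : 0 < eta0 ^ 3) by (apply pow_lt; lra).
    assert (hprod : 0 < eta0 ^ 3 * exp (c0 / r^2 * (/ 2 * (U 1%nat 0%nat x0 y0 ^ 2 + U 0%nat 1%nat x0 y0 ^ 2))))
      by (apply Rmult_lt_0_compat; lra).
    apply Rmult_integral in hz. destruct hz as [hz|hz]; [lra|].
    rewrite <- hz. ring. }
  assert (hF10g : forall x y, (x - x0)^2 + (y - y0)^2 < (del0/2)^2 ->
     F 1%nat 0%nat x y = U 3%nat 0%nat x y * U 0%nat 2%nat x y + U 2%nat 0%nat x y * U 1%nat 2%nat x y
                         - 2 * U 1%nat 1%nat x y * U 2%nat 1%nat x y).
  { intros x y hxy.
    assert (hxyG : (x - x0)^2 + (y - y0)^2 < del0^2) by (pose proof (shift_x x0 y0 del0 x y x hdel0 hxy); apply H; rewrite Rminus_diag, Rabs_R0; lra).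
    destruct (hG x y hxyG) as [hb _].
    apply (deriv_uniq (fun s => U 2%nat 0%nat s y * U 0%nat 2%nat s y - U 1%nat 1%nat s y ^ 2) x).
    - apply (is_derive_ext_loc (fun s => F 0%nat 0%nat s y)).
      + apply (locally_of_abs x _ (del0/4)); [lra|]. intros s hs.
        destruct (hG s y (shift_x x0 y0 del0 x y s hdel0 hxy hs)) as [hbs _].
        symmetry. apply hdet. exact hbs.
      + apply dFx; [lia| exact hb].
    - apply (det_deriv (fun s => U 2%nat 0%nat s y) (fun s => U 1%nat 1%nat s y) (fun s => U 0%nat 2%nat s y));
        apply dUx; try lia; exact hb. }
  assert (hF10 := hF10g x0 y0 ltac:(replace ((x0 - x0)^2 + (y0 - y0)^2) with 0 by ring; apply pow_lt; lra)).
  assert (hF01 : F 0%nat 1%nat x0 y0 = U 2%nat 1%nat x0 y0 * U 0%nat 2%nat x0 y0 + U 2%nat 0%nat x0 y0 * U 0%nat 3%nat x0 y0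
                         - 2 * U 1%nat 1%nat x0 y0 * U 1%nat 2%nat x0 y0).
  { apply (deriv_uniq (fun t => U 2%nat 0%nat x0 t * U 0%nat 2%nat x0 t - U 1%nat 1%nat x0 t ^ 2) y0).
    - apply (is_derive_ext_loc (fun t => F 0%nat 0%nat x0 t)).
      + apply (locally_of_abs y0 _ (del0/4)); [lra|]. intros s hs.
        assert (h0 : (x0 - x0)^2 + (y0 - y0)^2 < (del0/2)^2) by (replace ((x0 - x0)^2 + (y0 - y0)^2) with 0 by ring; apply pow_lt; lra).
        destruct (hG x0 s (shift_y x0 y0 del0 x0 y0 s hdel0 h0 hs)) as [hbs _].
        symmetry. apply hdet. exact hbs.
      + apply dFy; [lia| exact hball0].
    - apply (det_deriv (fun t => U 2%nat 0%nat x0 t) (fun t => U 1%nat 1%nat x0 t) (fun t => U 0%nat 2%nat x0 t));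
        apply dUy; try lia; exact hball0. }
  assert (hF11 : F 1%nat 1%nat x0 y0 =
     U 3%nat 1%nat x0 y0 * U 0%nat 2%nat x0 y0 + U 3%nat 0%nat x0 y0 * U 0%nat 3%nat x0 y0
     + U 2%nat 1%nat x0 y0 * U 1%nat 2%nat x0 y0 + U 2%nat 0%nat x0 y0 * U 1%nat 3%nat x0 y0
     - 2 * (U 1%nat 2%nat x0 y0 * U 2%nat 1%nat x0 y0 + U 1%nat 1%nat x0 y0 * U 2%nat 2%nat x0 y0)).
  { apply (deriv_uniq (fun t => U 3%nat 0%nat x0 t * U 0%nat 2%nat x0 t + U 2%nat 0%nat x0 t * U 1%nat 2%nat x0 t
                         - 2 * U 1%nat 1%nat x0 t * U 2%nat 1%nat x0 t) y0).
    - apply (is_derive_ext_loc (fun t => F 1%nat 0%nat x0 t)).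
      + apply (locally_of_abs y0 _ (del0/2)); [lra|]. intros s hs.
        apply hF10g. apply Rabs_def2 in hs.
        assert (E: (del0/2)^2 - (s-y0)^2 = (del0/2-(s-y0))*(del0/2+(s-y0))) by ring.
        assert (0 < (del0/2-(s-y0))*(del0/2+(s-y0))) by (apply Rmult_lt_0_compat; lra).
        replace ((x0 - x0)^2) with 0 by ring. lra.
      + apply dFy; [lia| exact hball0].
    - apply (det2_deriv (fun t => U 3%nat 0%nat x0 t) (fun t => U 0%nat 2%nat x0 t) (fun t => U 2%nat 0%nat x0 t)
         (fun t => U 1%nat 2%nat x0 t) (fun t => U 1%nat 1%nat x0 t) (fun t => U 2%nat 1%nat x0 t));
        apply dUy; try lia; exact hball0. }
  rewrite hb0 in hF10, hF01, hF11. unfold L, lc. unfold L, lc in hfv.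
  set (e11v := V11 r x0 y0 (L - lc) (U 3%nat 0%nat x0 y0 - U 1%nat 2%nat x0 y0)
                  (U 2%nat 1%nat x0 y0) (U 3%nat 1%nat x0 y0)).
  set (e22v := V22 r x0 y0 (L - lc) (U 2%nat 1%nat x0 y0 - U 0%nat 3%nat x0 y0)
                  (U 1%nat 2%nat x0 y0) (U 1%nat 3%nat x0 y0)).
  assert (hE11 : is_derive (fun s => E1 s y0) x0 e11v).
  { apply (etaD_xx r (fun s => U 2%nat 0%nat s y0) (fun s => U 1%nat 1%nat s y0) (fun s => U 0%nat 2%nat s y0)
             (fun s => U 3%nat 0%nat s y0) (fun s => U 2%nat 1%nat s y0) (fun s => U 1%nat 2%nat s y0)
             x0 y0 (U 4%nat 0%nat x0 y0) (U 3%nat 1%nat x0 y0) (U 2%nat 2%nat x0 y0)).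
    all: try (apply dUx; [lia| exact hball0]).
    exact hb0. exact hw. }
  assert (hE22 : is_derive (fun t => E2 x0 t) y0 e22v).
  { apply (etaD_yy r (fun t => U 2%nat 0%nat x0 t) (fun t => U 1%nat 1%nat x0 t) (fun t => U 0%nat 2%nat x0 t)
             (fun t => U 2%nat 1%nat x0 t) (fun t => U 1%nat 2%nat x0 t) (fun t => U 0%nat 3%nat x0 t)
             x0 y0 (U 2%nat 2%nat x0 y0) (U 1%nat 3%nat x0 y0) (U 0%nat 4%nat x0 y0)).
    all: try (apply dUy; [lia| exact hball0]).
    exact hb0. exact hw. }
  exists E1, E2, (del0/2), e11v, e22v.
  split; [lra|].
  split.
  { intros x y hxy. split; apply is_derive_Reals; [apply hD1| apply hD2]; exact hxy. }
  split; [apply is_derive_Reals; exact hE11|].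
  split; [apply is_derive_Reals; exact hE22|].
  assert (hfa : Rabs (F 1%nat 0%nat x0 y0) <= Gf) by lra.
  assert (hfb2 : Rabs (F 0%nat 1%nat x0 y0) <= Gf) by lra.
  assert (hua : Rabs (U 1%nat 0%nat x0 y0) <= Gu) by lra.
  assert (hub : Rabs (U 0%nat 1%nat x0 y0) <= Gu) by lra.
  assert (hwn : L - lc <> 0) by lra.
  assert (hq1 : F 1%nat 0%nat x0 y0 = U 3%nat 0%nat x0 y0 * lc + L * U 1%nat 2%nat x0 y0) by (unfold L, lc; rewrite hF10; ring).
  assert (hq2 : F 0%nat 1%nat x0 y0 = U 2%nat 1%nat x0 y0 * lc + L * U 0%nat 3%nat x0 y0) by (unfold L, lc; rewrite hF01; ring).
  assert (hq3 : F 1%nat 1%nat x0 y0 = U 3%nat 1%nat x0 y0 * lc + U 3%nat 0%nat x0 y0 * U 0%nat 3%nat x0 y0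
     + U 2%nat 1%nat x0 y0 * U 1%nat 2%nat x0 y0 + L * U 1%nat 3%nat x0 y0 - 2 * U 1%nat 2%nat x0 y0 * U 2%nat 1%nat x0 y0)
     by (unfold L, lc; rewrite hF11; ring).
  assert (hq4 : E1 x0 y0 = (-2*x0 + (2*x0 + 2*U 2%nat 1%nat x0 y0*x0*y0/(L - lc))) * (r^2 - x0^2)
       - (r^2 - y0^2) * (2*x0 + 2*U 2%nat 1%nat x0 y0*x0*y0/(L - lc))).
  { unfold E1. rewrite hb0, etaD_b0 by exact hw. unfold L, lc. field; exact hwn. }
  assert (hq5 : E2 x0 y0 = (-2*y0 + (2*U 1%nat 2%nat x0 y0*x0*y0/(L - lc))) * (r^2 - x0^2)
       - (r^2 - y0^2) * (2*U 1%nat 2%nat x0 y0*x0*y0/(L - lc))).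
  { unfold E2. rewrite hb0, etaD_b0 by exact hw. unfold L, lc. field; exact hwn. }
  assert (hq6 : 4 * E1 x0 y0 * L + eta_fun r t1 t2 x0 y0 * (32 / m / r ^ 2) * U 1%nat 0%nat x0 y0 * L * L
     + eta_fun r t1 t2 x0 y0 * U 3%nat 0%nat x0 y0 = 0) by (rewrite heta0; exact hC1).
  assert (hq7 : 4 * E2 x0 y0 * L + eta_fun r t1 t2 x0 y0 * (32 / m / r ^ 2) * U 0%nat 1%nat x0 y0 * lc * L
     + eta_fun r t1 t2 x0 y0 * U 2%nat 1%nat x0 y0 = 0) by (rewrite heta0; exact hC2).
  assert (HA := final_alg r m M Gf Gu x0 y0 L lc (F 0%nat 0%nat x0 y0) (F 1%nat 0%nat x0 y0)
    (F 0%nat 1%nat x0 y0) (F 1%nat 1%nat x0 y0) (U 1%nat 0%nat x0 y0) (U 0%nat 1%nat x0 y0)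
    (U 3%nat 0%nat x0 y0) (U 2%nat 1%nat x0 y0) (U 1%nat 2%nat x0 y0) (U 0%nat 3%nat x0 y0)
    (U 3%nat 1%nat x0 y0) (U 1%nat 3%nat x0 y0)
    (eta_fun r t1 t2 x0 y0) (E1 x0 y0) (E2 x0 y0) e11v e22v
    hr hm (conj hfm hfM) hB hA hLp hfv hfa hfb2 hua hub hmain
    hq1 hq2 hq3 heta0 hq4 hq5 eq_refl eq_refl hq6 hq7).
  cbv zeta in HA. cbv zeta. exact HA.
Qed.
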